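(* Let $\mathcal{FT}$ be the free nonsymmetric operad generated by five ternary operations $\omega_1,\dots,\omega_5$, written $\omega_i=(x,y,z)_i$, and let $d\colon\mathcal{FT}\to\mathcal{D}$ be the operad morphism into the dendriform operad defined on generators by \[ (x,y,z)_1\mapsto x\succ(y\prec z),\quad (x,y,z)_2\mapsto x\prec(y\prec z),\quad (x,y,z)_3\mapsto x\prec(y\succ z), \] \[ (x,y,z)_4\mapsto (x\succ y)\succ z,\quad (x,y,z)_5\mapsto (x\prec y)\succ z . \] (Its image is the Veronese square $\mathcal{D}^{[2]}$, the suboperad of $\mathcal{D}$ generated by $\mathcal{D}(3)$.) Then the kernel of the restriction $d\colon\mathcal{FT}(5)\to\mathcal{D}(5)$ (the space of quadratic relations satisfied by the five generating operations of $\mathcal{D}^{[2]}$) has dimension $33$, and the following 33 elements of $\mathcal{FT}(5)$ form a basis of it; i.e. every quadratic relation satisfied by the five generators is a linear combination of: \begin{align*} &((v,w,x)_4,y,z)_2 - (v,w,(x,y,z)_2)_4,\\ &((v,w,x)_5,y,z)_2 - (v,w,(x,y,z)_2)_5,\\ &((v,w,x)_4,y,z)_3 - (v,w,(x,y,z)_3)_4,\\ &((v,w,x)_5,y,z)_3 - (v,w,(x,y,z)_3)_5,\\ &((v,w,x)_1,y,z)_1 + ((v,w,x)_2,y,z)_1 - (v,(w,x,y)_5,z)_1,\\ &(v,(w,x,y)_1,z)_3 + (v,(w,x,y)_2,z)_3 - (v,w,(x,y,z)_5)_3,\\ &((v,w,x)_1,y,z)_4 + ((v,w,x)_2,y,z)_4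 - (v,(w,x,y)_5,z)_4,\\ &((v,w,x)_1,y,z)_1 + ((v,w,x)_4,y,z)_1 - (v,w,(x,y,z)_1)_4,\\ &(v,(w,x,y)_4,z)_2 + (v,(w,x,y)_5,z)_2 - (v,w,(x,y,z)_1)_3,\\ &((v,w,x)_4,y,z)_5 + ((v,w,x)_5,y,z)_5 - (v,(w,x,y)_1,z)_4,\\ &((v,w,x)_4,y,z)_5 + (v,(w,x,y)_2,z)_4 - (v,w,(x,y,z)_5)_4,\\ &(v,(w,x,y)_3,z)_1 - (v,w,(x,y,z)_1)_1 - (v,w,(x,y,z)_4)_1,\\ &(v,(w,x,y)_3,z)_2 - (v,w,(x,y,z)_1)_2 - (v,w,(x,y,z)_4)_2,\\ &((v,w,x)_3,y,z)_5 - (v,(w,x,y)_1,z)_5 - (v,(w,x,y)_4,z)_5,\\ &((v,w,x)_1,y,z)_2 - (v,w,(x,y,z)_1)_1 - (v,w,(x,y,z)_2)_1,\\ &((v,w,x)_3,y,z)_2 - (v,(w,x,y)_4,z)_2 - (v,w,(x,y,z)_2)_3,\\ &(v,(w,x,y)_1,z)_2 - (v,w,(x,y,z)_2)_3 - (v,w,(x,y,z)_3)_3,\\ &((v,w,x)_1,y,z)_5 - (v,(w,x,y)_2,z)_4 - (v,(w,x,y)_3,z)_4,\\ &(v,(w,x,y)_2,z)_1 - (v,w,(x,y,z)_2)_1 - (v,w,(x,y,z)_3)_1 - (v,w,(x,y,z)_5)_1,\\ &((v,w,x)_2,y,z)_2 - (v,(w,x,y)_5,z)_2 - (v,w,(x,y,z)_1)_2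 - (v,w,(x,y,z)_2)_2,\\ &(v,(w,x,y)_2,z)_2 - (v,w,(x,y,z)_2)_2 - (v,w,(x,y,z)_3)_2 - (v,w,(x,y,z)_5)_2,\\ &((v,w,x)_3,y,z)_3 - (v,(w,x,y)_1,z)_3 - (v,(w,x,y)_4,z)_3 - (v,w,(x,y,z)_3)_3,\\ &(v,(w,x,y)_3,z)_3 + (v,(w,x,y)_4,z)_3 + (v,(w,x,y)_5,z)_3 - (v,w,(x,y,z)_4)_3,\\ &((v,w,x)_3,y,z)_4 + ((v,w,x)_4,y,z)_4 + ((v,w,x)_5,y,z)_4 - (v,(w,x,y)_4,z)_4,\\ &((v,w,x)_1,y,z)_4 + ((v,w,x)_4,y,z)_4 + (v,(w,x,y)_3,z)_4 - (v,w,(x,y,z)_4)_4,\\ &((v,w,x)_2,y,z)_5 - (v,(w,x,y)_2,z)_5 - (v,(w,x,y)_3,z)_5 - (v,(w,x,y)_5,z)_5,\\ &((v,w,x)_5,y,z)_5 + (v,(w,x,y)_1,z)_5 + (v,(w,x,y)_2,z)_5 - (v,w,(x,y,z)_5)_5,\\ &((v,w,x)_2,y,z)_1 + ((v,w,x)_3,y,z)_1 + ((v,w,x)_5,y,z)_1 - (v,w,(x,y,z)_1)_5,\\ &(v,(w,x,y)_4,z)_1 + (v,(w,x,y)_5,z)_1 - (v,w,(x,y,z)_1)_4 - (v,w,(x,y,z)_1)_5,\\ &((v,w,x)_1,y,z)_3 - (v,(w,x,y)_2,z)_1 + (v,w,(x,y,z)_2)_1 - (v,w,(x,y,z)_4)_1,\\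 &(v,(w,x,y)_1,z)_1 - (v,w,(x,y,z)_2)_4 - (v,w,(x,y,z)_2)_5 - (v,w,(x,y,z)_3)_4 - (v,w,(x,y,z)_3)_5,\\ &((v,w,x)_2,y,z)_3 - (v,(w,x,y)_2,z)_2 - (v,(w,x,y)_2,z)_3 + (v,(w,x,y)_4,z)_3\\ &\qquad + (v,w,(x,y,z)_2)_2 - (v,w,(x,y,z)_4)_2 - (v,w,(x,y,z)_4)_3,\\ &((v,w,x)_2,y,z)_4 + ((v,w,x)_2,y,z)_5 - ((v,w,x)_4,y,z)_4 - (v,(w,x,y)_2,z)_5\\ &\qquad + (v,(w,x,y)_4,z)_4 + (v,(w,x,y)_4,z)_5 - (v,w,(x,y,z)_4)_5. \end{align*}
   Context: All operads are nonsymmetric, arity-graded, over a field of characteristic $0$ (e.g. $\mathbb{Q}$). The dendriform operad $\mathcal{D}$ is the nonsymmetric operad generated by two binary operations $\prec,\succ$ subject to \[ (x\succ y)\prec z = x\succ(y\prec z),\quad (x\prec y)\prec z = x\prec(y\prec z)+x\prec(y\succ z),\quad x\succ(y\succ z)=(x\succ y)\succ z+(x\prec y)\succ z . \] In $\mathcal{FT}$, the arity-5 component $\mathcal{FT}(5)$ has dimension 75 with basis the monomials $\omega_j\circ_k\omega_i$ ($1\le i,j\le5$, $k=1,2,3$), written with the variables $v,w,x,y,z$ in fixed left-to-right order as \[ ((v,w,x)_i,y,z)_j=\omega_j\circ_1\omega_i,\qquad (v,(w,x,y)_i,z)_j=\omega_j\circ_2\omega_i,\qquad (v,w,(x,y,z)_i)_j=\omega_j\circ_3\omega_i,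 \] where $\circ_k$ denotes partial composition into the $k$-th input. A relation is an element of $\mathcal{FT}(5)$ mapped to $0$ by $d$ (meaning the corresponding identity holds in every dendriform algebra, e.g. $((v,w,x)_4,y,z)_2\mapsto ((v\succ w)\succ x)\prec(y\prec z)$). *)

(* Defs.v *)
From mathcomp Require Import all_boot all_order all_algebra.
Set Implicit Arguments. Unset Strict Implicit. Unset Printing Implicit Defensive.
Import GRing.Theory.
Local Open Scope ring_scope.

Definition is_dendriform (F : fieldType) (A : lmodType F)
  (pr su : A -> A -> A) : Prop :=
  [/\ (forall (a : F) x y z, pr (a *: x + y) z = a *: pr x z + pr y z),
      (forall (a : F) x y z, pr x (a *: y + z) = a *: pr x y + pr x z),
      (forall (a : F) x y z, su (a *: x + y) z = a *: su x z + su y z),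
      (forall (a : F) x y z, su x (a *: y + z) = a *: su x y + su x z) &
   [/\ (forall x y z, pr (su x y) z = su x (pr y z)),
       (forall x y z, pr (pr x y) z = pr x (pr y z) + pr x (su y z)) &
       (forall x y z, su x (su y z) = su (su x y) z + su (pr x y) z)]].

(* The images d(omega_i) of the five ternary generators (0-based index i). *)
Definition dom (F : fieldType) (A : lmodType F) (pr su : A -> A -> A)
  (i : nat) (x y z : A) : A :=
  match i with
  | 0 => su x (pr y z)
  | 1 => pr x (pr y z)
  | 2 => pr x (su y z)
  | 3 => su (su x y) z
  | _ => su (pr x y) z
  end.

(* FT(5) is identified with 'rV[F]_75; the basis monomial
   omega_j \circ_k omega_i (k in 1..3, i,j in 1..5) has index
   (k-1)*25 + (j-1)*5 + (i-1). *)
Definition ftidx (k i j : nat) : 'I_75 := inord (k.-1 * 25 + j.-1 * 5 + i.-1).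

(* mon k i j = the basis monomial with inner generator i, outer generator j,
   the inner one plugged into position k:
   k = 1 : ((v,w,x)_i,y,z)_j ; k = 2 : (v,(w,x,y)_i,z)_j ; k = 3 : (v,w,(x,y,z)_i)_j *)
Definition mon (F : fieldType) (k i j : nat) : 'rV[F]_75 := delta_mx 0 (ftidx k i j).

Definition evalmon (F : fieldType) (A : lmodType F) (pr su : A -> A -> A)
  (m : 'I_75) (v w x y z : A) : A :=
  let k := (m %/ 25)%N in
  let j := ((m %% 25) %/ 5)%N in
  let i := (m %% 5)%N in
  match k with
  | 0 => dom pr su j (dom pr su i v w x) y z
  | 1 => dom pr su j v (dom pr su i w x y) z
  | _ => dom pr su j v w (dom pr su i x y z)
  end.

(* c : FT(5) lies in the kernel of d : FT(5) -> D(5), i.e. the corresponding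
   identity holds in every dendriform algebra over F. *)
Definition in_ker_d (F : fieldType) (c : 'rV[F]_75) : Prop :=
  forall (A : lmodType F) (pr su : A -> A -> A), is_dendriform pr su ->
  forall v w x y z : A, \sum_(m < 75) c 0 m *: evalmon pr su m v w x y z = 0.

Section Rels.
Variable F : fieldType.
Local Notation P1 i j := (mon F 1 i j).
Local Notation P2 i j := (mon F 2 i j).
Local Notation P3 i j := (mon F 3 i j).

Definition rels33 : seq 'rV[F]_75 := [::
  P1 4 2 - P3 2 4;
  P1 5 2 - P3 2 5;
  P1 4 3 - P3 3 4;
  P1 5 3 - P3 3 5;
  P1 1 1 + P1 2 1 - P2 5 1;
  P2 1 3 + P2 2 3 - P3 5 3;
  P1 1 4 + P1 2 4 - P2 5 4;
  P1 1 1 + P1 4 1 - P3 1 4;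
  P2 4 2 + P2 5 2 - P3 1 3;
  P1 4 5 + P1 5 5 - P2 1 4;
  P1 4 5 + P2 2 4 - P3 5 4;
  P2 3 1 - P3 1 1 - P3 4 1;
  P2 3 2 - P3 1 2 - P3 4 2;
  P1 3 5 - P2 1 5 - P2 4 5;
  P1 1 2 - P3 1 1 - P3 2 1;
  P1 3 2 - P2 4 2 - P3 2 3;
  P2 1 2 - P3 2 3 - P3 3 3;
  P1 1 5 - P2 2 4 - P2 3 4;
  P2 2 1 - P3 2 1 - P3 3 1 - P3 5 1;
  P1 2 2 - P2 5 2 - P3 1 2 - P3 2 2;
  P2 2 2 - P3 2 2 - P3 3 2 - P3 5 2;
  P1 3 3 - P2 1 3 - P2 4 3 - P3 3 3;
  P2 3 3 + P2 4 3 + P2 5 3 - P3 4 3;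
  P1 3 4 + P1 4 4 + P1 5 4 - P2 4 4;
  P1 1 4 + P1 4 4 + P2 3 4 - P3 4 4;
  P1 2 5 - P2 2 5 - P2 3 5 - P2 5 5;
  P1 5 5 + P2 1 5 + P2 2 5 - P3 5 5;
  P1 2 1 + P1 3 1 + P1 5 1 - P3 1 5;
  P2 4 1 + P2 5 1 - P3 1 4 - P3 1 5;
  P1 1 3 - P2 2 1 + P3 2 1 - P3 4 1;
  P2 1 1 - P3 2 4 - P3 2 5 - P3 3 4 - P3 3 5;
  P1 2 3 - P2 2 2 - P2 2 3 + P2 4 3 + P3 2 2 - P3 4 2 - P3 4 3;
  P1 2 4 + P1 2 5 - P1 4 4 - P2 2 5 + P2 4 4 + P2 4 5 - P3 4 5 ].

Definition relmx : 'M[F]_(33, 75) := \matrix_(r < 33) nth 0 rels33 r.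
End Rels.

(* Main.v *)
Require Import Defs.
From HB Require Import structures.
From mathcomp Require Import all_boot all_order all_algebra.
From mathcomp Require Import zify.
Set Implicit Arguments. Unset Strict Implicit. Unset Printing Implicit Defensive.
Import GRing.Theory.
Local Open Scope ring_scope.

Inductive tm := V of nat | Pr of tm & tm | Su of tm & tm.
Fixpoint tm_eqb (s t : tm) : bool := match s, t with
 | V n, V m => (n == m)%N
 | Pr a b, Pr c d => tm_eqb a c && tm_eqb b d
 | Su a b, Su c d => tm_eqb a c && tm_eqb b d
 | _, _ => false end.
Lemma tm_eqP : Equality.axiom tm_eqb.
Proof.
elim=> [n|a IHa b IHb|a IHa b IHb] [m|c d|c d] /=; try by constructor.
- by apply: (iffP eqP) => [->|[]].
- apply: (iffP andP) => [[/IHa -> /IHb ->]//|[<- <-]]; split; [exact/IHa|exact/IHb].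
- apply: (iffP andP) => [[/IHa -> /IHb ->]//|[<- <-]]; split; [exact/IHa|exact/IHb].
Qed.
HB.instance Definition _ := hasDecEq.Build tm tm_eqP.

Definition comb := seq (int * tm).
Definition scale (k : int) (l : comb) : comb := [seq (k * p.1, p.2) | p <- l].

Fixpoint prN (f : nat) (a b : tm) {struct f} : comb :=
  match f with
  | 0%N => [:: (1, Pr a b)]
  | f'.+1 =>
    match a with
    | V _ => [:: (1, Pr a b)]
    | Pr x y => flatten [seq scale p.1 [:: (1, Pr x p.2)] | p <- prN f' y b ++ suN f' y b]
    | Su x y => flatten [seq scale p.1 (suN f' x p.2) | p <- prN f' y b]
    end
  end
with suN (f : nat) (a b : tm) {struct f} : comb :=
  match f with
  | 0%N => [:: (1, Su a b)]
  | f'.+1 =>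
    match b with
    | Su x y => flatten [seq scale p.1 (suN f' p.2 y) | p <- suN f' a x ++ prN f' a x]
    | _ => [:: (1, Su a b)]
    end
  end.

Definition fuel := 40%N.
Fixpoint nf (t : tm) : comb :=
  match t with
  | V n => [:: (1, V n)]
  | Pr a b => flatten [seq scale p.1 (flatten [seq scale q.1 (prN fuel p.2 q.2) | q <- nf b]) | p <- nf a]
  | Su a b => flatten [seq scale p.1 (flatten [seq scale q.1 (suN fuel p.2 q.2) | q <- nf b]) | p <- nf a]
  end.
Definition nfC (l : comb) : comb := flatten [seq scale p.1 (nf p.2) | p <- l].

Definition coefT (l : comb) (t : tm) : int :=
  foldr (fun p acc => if p.2 == t then p.1 + acc else acc) 0 l.
Definition zcheck (l : comb) : bool := all (fun t => coefT l t == 0) (map snd l).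

Section Sound.
Variables (F : fieldType) (A : lmodType F) (pr su : A -> A -> A).
Hypothesis HD : is_dendriform pr su.
Let HD' : _ := HD : [/\ _, _, _, _ & _].

Variable env : nat -> A.
Fixpoint I (t : tm) : A := match t with V n => env n | Pr a b => pr (I a) (I b) | Su a b => su (I a) (I b) end.
Definition ev (l : comb) : A := \sum_(p <- l) p.1%:~R *: I p.2.

Definition lin (h : A -> A) := forall (k : F) u v, h (k *: u + v) = k *: h u + h v.
Lemma lin0 h : lin h -> h 0 = 0.
Proof. by move=> H; have := H (-1) 0 0; rewrite scaler0 addr0 scaleN1r addNr. Qed.
Lemma linD h : lin h -> forall u v, h (u + v) = h u + h v.
Proof. by move=> H u v; have := H 1 u v; rewrite !scale1r. Qed.
Lemma linZ h : lin h -> forall k u, h (k *: u) = k *: h u.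
Proof. by move=> H k u; have := H k u 0; rewrite !addr0 (lin0 H) addr0. Qed.

Lemma lin_id : lin id. Proof. by []. Qed.
Lemma lin_prl z : lin (pr ^~ z). Proof. by case: HD' => H _ _ _ _ k u v; rewrite H. Qed.
Lemma lin_prr z : lin (pr z). Proof. by case: HD' => _ H _ _ _ k u v; rewrite H. Qed.
Lemma lin_sul z : lin (su ^~ z). Proof. by case: HD' => _ _ H _ _ k u v; rewrite H. Qed.
Lemma lin_sur z : lin (su z). Proof. by case: HD' => _ _ _ H _ k u v; rewrite H. Qed.

Lemma ev_nil : ev [::] = 0. Proof. by rewrite /ev big_nil. Qed.
Lemma ev_cons p l : ev (p :: l) = p.1%:~R *: I p.2 + ev l. Proof. by rewrite /ev big_cons. Qed.
Lemma ev_cat l1 l2 : ev (l1 ++ l2) = ev l1 + ev l2. Proof. by rewrite /ev big_cat. Qed.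
Lemma ev_scale k l : ev (scale k l) = k%:~R *: ev l.
Proof.
elim: l => [|p l IH]; first by rewrite /= ev_nil scaler0.
by rewrite /= !ev_cons IH scalerDr /= intrM scalerA.
Qed.

Lemma ev_flat (g : tm -> comb) (h : A -> A) l :
  lin h -> (forall t, ev (g t) = h (I t)) ->
  ev (flatten [seq scale p.1 (g p.2) | p <- l]) = h (ev l).
Proof.
move=> Hh Hg; elim: l => [|p l IH] /=; first by rewrite ev_nil lin0.
by rewrite ev_cat ev_scale Hg IH ev_cons Hh.
Qed.

Lemma ev1 t : ev [:: (1, t)] = I t.
Proof. by rewrite ev_cons ev_nil addr0 scale1r. Qed.

Lemma prsuN_sound f : forall a b,
  ev (prN f a b) = pr (I a) (I b) /\ ev (suN f a b) = su (I a) (I b).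
Proof.
case: HD' => _ _ _ _ [A1 A2 A3].
elim: f => [|f IH] a b /=; first by rewrite !ev1.
split.
- case: a => [n|x y|x y] /=; first by rewrite ev1.
  + rewrite (@ev_flat (fun t => [:: (1, Pr x t)]) (pr (I x))); last by move=> t; rewrite ev1.
      by rewrite ev_cat (proj1 (IH y b)) (proj2 (IH y b)) A2 (linD (lin_prr _)).
    exact: lin_prr.
  + rewrite (@ev_flat (suN f x) (su (I x))); last by move=> t; rewrite (proj2 (IH x t)).
      by rewrite (proj1 (IH y b)) A1.
    exact: lin_sur.
- case: b => [n|x y|x y] /=; try by rewrite ev1.
  rewrite (@ev_flat (fun t => suN f t y) (su ^~ (I y))); last by move=> t; rewrite (proj2 (IH t y)).
    by rewrite ev_cat (proj2 (IH a x)) (proj1 (IH a x)) A3 (linD (lin_sul _)).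
  exact: lin_sul.
Qed.

Arguments prN : simpl never.
Arguments suN : simpl never.
Lemma nf_sound t : ev (nf t) = I t.
Proof.
elim: t => [n|a IHa b IHb|a IHa b IHb] /=; first by rewrite ev1.
- rewrite (@ev_flat (fun t => flatten [seq scale q.1 (prN fuel t q.2) | q <- nf b]) (pr ^~ (I b))).
  + by rewrite IHa.
  + exact: lin_prl.
  + move=> t; rewrite (@ev_flat (prN fuel t) (pr (I t))) ?IHb //; first exact: lin_prr.
    by move=> s; rewrite (proj1 (prsuN_sound _ _ _)).
- rewrite (@ev_flat (fun t => flatten [seq scale q.1 (suN fuel t q.2) | q <- nf b]) (su ^~ (I b))).
  + by rewrite IHa.
  + exact: lin_sul.
  + move=> t; rewrite (@ev_flat (suN fuel t) (su (I t))) ?IHb //; first exact: lin_sur.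
    by move=> s; rewrite (proj2 (prsuN_sound _ _ _)).
Qed.

Lemma nfC_sound l : ev (nfC l) = ev l.
Proof. by rewrite /nfC (@ev_flat nf id) // => t; exact: nf_sound. Qed.

Lemma ev_split t l :
  ev l = (coefT l t)%:~R *: I t + ev (filter (fun p => p.2 != t) l).
Proof.
elim: l => [|p l IH] /=; first by rewrite ev_nil mulr0z scale0r addr0.
rewrite ev_cons; case: (eqVneq p.2 t) => [E|E] /=.
- by rewrite E IH intrD scalerDl addrA.
- by rewrite ev_cons IH addrCA.
Qed.

Lemma coefT_filter t t' l : t' != t ->
  coefT (filter (fun p => p.2 != t) l) t' = coefT l t'.
Proof.
move=> ne; elim: l => [|p l IH] //=.
case: (eqVneq p.2 t) => [E|E] /=.
- by rewrite IH; case: eqP => // E'; move: ne; rewrite -E' E eqxx.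
- by rewrite IH.
Qed.

Lemma zcheck_ev l : zcheck l -> ev l = 0.
Proof.
move: {2}(size l) (leqnn (size l)) => n; elim: n l => [|n IH] [|p l] //=; try by rewrite ev_nil.
move=> Hs Hz.
have Hc : coefT (p :: l) p.2 = 0.
  by move: Hz; rewrite /zcheck /= => /andP [/eqP].
rewrite (ev_split p.2) Hc scale0r add0r /= eqxx /=.
apply: IH; first by rewrite size_filter (leq_trans (count_size _ _)).
apply/allP => t /mapP [q]; rewrite mem_filter => /andP [nq ql] ->.
rewrite coefT_filter //.
have : q.2 \in map snd (p :: l) by rewrite /= inE (map_f snd ql) orbT.
by move=> /(allP Hz) /=; rewrite eq_sym in nq; rewrite (negbTE nq).
Qed.

Lemma rel_sound l : zcheck (nfC l) -> ev l = 0.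
Proof. by move=> /zcheck_ev; rewrite nfC_sound. Qed.
End Sound.

Definition dom_tm (i : nat) (x y z : tm) : tm :=
  match i with
  | 0 => Su x (Pr y z)
  | 1 => Pr x (Pr y z)
  | 2 => Pr x (Su y z)
  | 3 => Su (Su x y) z
  | _ => Su (Pr x y) z
  end.
Definition mon_tm (m : nat) : tm :=
  let k := (m %/ 25)%N in
  let j := ((m %% 25) %/ 5)%N in
  let i := (m %% 5)%N in
  match k with
  | 0 => dom_tm j (dom_tm i (V 0) (V 1) (V 2)) (V 3) (V 4)
  | 1 => dom_tm j (V 0) (dom_tm i (V 1) (V 2) (V 3)) (V 4)
  | _ => dom_tm j (V 0) (V 1) (dom_tm i (V 2) (V 3) (V 4))
  end.

Section Link.
Variables (F : fieldType) (A : lmodType F) (pr su : A -> A -> A).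
Variables (v w x y z : A).
Definition env5 (n : nat) : A := nth 0 [:: v; w; x; y; z] n.
Lemma I_dom i a b c : I pr su env5 (dom_tm i a b c) =
  dom pr su i (I pr su env5 a) (I pr su env5 b) (I pr su env5 c).
Proof. by case: i => [|[|[|[|i]]]]. Qed.
Lemma I_mon (m : 'I_75) : I pr su env5 (mon_tm m) = evalmon pr su m v w x y z.
Proof.
rewrite /mon_tm /evalmon; case: (m %/ 25)%N => [|[|k]]; by rewrite !I_dom.
Qed.
End Link.
Definition relsL : seq (seq (bool * (nat * nat * nat))) := [::
[:: (true, (1, 4, 2)); (false, (3, 2, 4))];
[:: (true, (1, 5, 2)); (false, (3, 2, 5))];
[:: (true, (1, 4, 3)); (false, (3, 3, 4))];
[:: (true, (1, 5, 3)); (false, (3, 3, 5))];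
[:: (true, (1, 1, 1)); (true, (1, 2, 1)); (false, (2, 5, 1))];
[:: (true, (2, 1, 3)); (true, (2, 2, 3)); (false, (3, 5, 3))];
[:: (true, (1, 1, 4)); (true, (1, 2, 4)); (false, (2, 5, 4))];
[:: (true, (1, 1, 1)); (true, (1, 4, 1)); (false, (3, 1, 4))];
[:: (true, (2, 4, 2)); (true, (2, 5, 2)); (false, (3, 1, 3))];
[:: (true, (1, 4, 5)); (true, (1, 5, 5)); (false, (2, 1, 4))];
[:: (true, (1, 4, 5)); (true, (2, 2, 4)); (false, (3, 5, 4))];
[:: (true, (2, 3, 1)); (false, (3, 1, 1)); (false, (3, 4, 1))];
[:: (true, (2, 3, 2)); (false, (3, 1, 2)); (false, (3, 4, 2))];
[:: (true, (1, 3, 5)); (false, (2, 1, 5)); (false, (2, 4, 5))];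
[:: (true, (1, 1, 2)); (false, (3, 1, 1)); (false, (3, 2, 1))];
[:: (true, (1, 3, 2)); (false, (2, 4, 2)); (false, (3, 2, 3))];
[:: (true, (2, 1, 2)); (false, (3, 2, 3)); (false, (3, 3, 3))];
[:: (true, (1, 1, 5)); (false, (2, 2, 4)); (false, (2, 3, 4))];
[:: (true, (2, 2, 1)); (false, (3, 2, 1)); (false, (3, 3, 1)); (false, (3, 5, 1))];
[:: (true, (1, 2, 2)); (false, (2, 5, 2)); (false, (3, 1, 2)); (false, (3, 2, 2))];
[:: (true, (2, 2, 2)); (false, (3, 2, 2)); (false, (3, 3, 2)); (false, (3, 5, 2))];
[:: (true, (1, 3, 3)); (false, (2, 1, 3)); (false, (2, 4, 3)); (false, (3, 3, 3))];
[:: (true, (2, 3, 3)); (true, (2, 4, 3)); (true, (2, 5, 3)); (false, (3, 4, 3))];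
[:: (true, (1, 3, 4)); (true, (1, 4, 4)); (true, (1, 5, 4)); (false, (2, 4, 4))];
[:: (true, (1, 1, 4)); (true, (1, 4, 4)); (true, (2, 3, 4)); (false, (3, 4, 4))];
[:: (true, (1, 2, 5)); (false, (2, 2, 5)); (false, (2, 3, 5)); (false, (2, 5, 5))];
[:: (true, (1, 5, 5)); (true, (2, 1, 5)); (true, (2, 2, 5)); (false, (3, 5, 5))];
[:: (true, (1, 2, 1)); (true, (1, 3, 1)); (true, (1, 5, 1)); (false, (3, 1, 5))];
[:: (true, (2, 4, 1)); (true, (2, 5, 1)); (false, (3, 1, 4)); (false, (3, 1, 5))];
[:: (true, (1, 1, 3)); (false, (2, 2, 1)); (true, (3, 2, 1)); (false, (3, 4, 1))];
[:: (true, (2, 1, 1)); (false, (3, 2, 4)); (false, (3, 2, 5)); (false, (3, 3, 4)); (false, (3, 3, 5))];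
[:: (true, (1, 2, 3)); (false, (2, 2, 2)); (false, (2, 2, 3)); (true, (2, 4, 3)); (true, (3, 2, 2)); (false, (3, 4, 2)); (false, (3, 4, 3))];
[:: (true, (1, 2, 4)); (true, (1, 2, 5)); (false, (1, 4, 4)); (false, (2, 2, 5)); (true, (2, 4, 4)); (true, (2, 4, 5)); (false, (3, 4, 5))]].

Definition idxn (t : nat * nat * nat) : nat := (t.1.1.-1 * 25 + t.2.-1 * 5 + t.1.2.-1)%N.
Definition coefRel (l : seq (bool * (nat * nat * nat))) (m : nat) : int :=
  foldr (fun p acc => (if m == idxn p.2 then
     (if p.1 then 1 else -1) else 0) + acc) 0 l.
Definition RI (r m : nat) : int := coefRel (nth [::] relsL r) m.

Definition rel_check : bool :=
  all (fun r => zcheck (nfC [seq (RI r m, mon_tm m) | m <- iota 0 75])) (iota 0 33).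
Lemma rel_check_ok : rel_check = true.
Proof. vm_compute. reflexivity. Qed.

Lemma relsL_bounds : all (all (fun p => idxn p.2 < 75)%N) relsL = true.
Proof. by vm_compute. Qed.

Section RelMx.
Variable F : fieldType.
Definition sgnmon (q : bool * (nat * nat * nat)) : 'rV[F]_75 :=
  if q.1 then mon F q.2.1.1 q.2.1.2 q.2.2 else - mon F q.2.1.1 q.2.1.2 q.2.2.
Definition relI (l : seq (bool * (nat * nat * nat))) : 'rV[F]_75 :=
  match l with [::] => 0 | p :: l' => foldl (fun acc q => acc + sgnmon q) (sgnmon p) l' end.
Lemma rels33E : rels33 F = map relI relsL.
Proof. reflexivity. Qed.

Lemma sgnmonE q (m : 'I_75) : (idxn q.2 < 75)%N ->
  sgnmon q 0 m = (if (m : nat) == idxn q.2 then (if q.1 then 1 else -1) else 0)%:~R.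
Proof.
move=> h; rewrite /sgnmon /mon /ftidx.
have E : (m == inord (q.2.1.1.-1 * 25 + q.2.2.-1 * 5 + q.2.1.2.-1)%N :> 'I_75) = ((m : nat) == idxn q.2).
  by rewrite -val_eqE /= inordK.
case: q.1; rewrite !mxE eqxx /= E; case: (_ == _) => /=.
all: by rewrite ?mulr1z ?mulr0z ?mulrN1z ?oppr0.
Qed.

Lemma relIE l (m : 'I_75) : all (fun p => idxn p.2 < 75)%N l ->
  relI l 0 m = (coefRel l m)%:~R.
Proof.
case: l => [|p l] /=; first by rewrite mxE mulr0z.
move=> /andP [hp hl].
have H : forall acc, (foldl (fun acc q => acc + sgnmon q) acc l) 0 m = acc 0 m + (coefRel l m)%:~R.
  elim: l hl => [|q l IH] /=; first by move=> _ acc; rewrite mulr0z addr0.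
  move=> /andP [hq hl] acc; by rewrite IH // mxE sgnmonE // intrD addrA.
by rewrite H sgnmonE // intrD.
Qed.

Lemma relmxE (r : 'I_33) (m : 'I_75) : relmx F r m = (RI r m)%:~R.
Proof.
rewrite /relmx mxE rels33E (nth_map [::]); last by rewrite (ltn_ord r).
rewrite relIE //; have := relsL_bounds => /allP; apply; exact: mem_nth.
Qed.

Lemma rel_row_sound (A : lmodType F) (pr su : A -> A -> A) (HD : is_dendriform pr su)
  (v w x y z : A) (r : 'I_33) :
  \sum_(m < 75) relmx F r m *: evalmon pr su m v w x y z = 0.
Proof.
have := rel_check_ok; rewrite /rel_check => /allP /(_ r).
rewrite mem_iota ltn_ord => /(_ isT) H.
have := rel_sound HD (env5 v w x y z) H.
rewrite /ev big_map => E; rewrite -[X in _ = X]E.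
rewrite [in RHS](_ : iota 0 75 = index_iota 0 75) // big_mkord.
by apply: eq_bigr => m _; rewrite relmxE -I_mon.
Qed.
End RelMx.
Definition Tpl : seq (seq (seq nat)) := [::
[:: [::1]; [::3]; [::4]; [::8]; [::9]; [::10]; [::11]; [::12]; [::22]; [::23]; [::24]; [::25]; [::26]; [::27]; [::28]; [::29]; [::30]; [::31]; [::32]; [::33]; [::34]; [::35]; [::]; [::]; [::]; [::]; [::]; [::]; [::]; [::]; [::]; [::]; [::]; [::]; [::]; [::]; [::]; [::]; [::]; [::]; [::]; [::]; [::]; [::]; [::]; [::]; [::]; [::]; [::]; [::]; [::]; [::]; [::]; [::]; [::]; [::]; [::]; [::]; [::]; [::]; [::]; [::]; [::]; [::]];
[:: [::3; 4]; [::8; 10]; [::9; 11; 12]; [::22; 27]; [::23; 28]; [::24; 29; 32]; [::25; 30; 33]; [::26; 31; 34; 35]; [::]; [::]; [::]; [::]; [::]; [::]; [::]; [::]; [::]; [::]; [::]; [::]; [::]; [::]; [::]; [::]; [::]; [::]; [::]; [::]; [::]; [::]; [::]; [::]; [::]; [::]; [::]; [::]; [::]; [::]; [::]; [::]; [::]; [::]; [::]; [::]; [::]; [::]; [::]; [::]; [::]; [::]; [::]; [::]; [::]; [::]; [::]; [::]; [::]; [::]; [::]; [::]; [::]; [::]; [::]; [::]];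
[:: [::5]; [::13]; [::14]; [::36]; [::37]; [::38]; [::39]; [::40]; [::]; [::]; [::]; [::]; [::]; [::]; [::]; [::]; [::]; [::]; [::]; [::]; [::]; [::]; [::]; [::]; [::]; [::]; [::]; [::]; [::]; [::]; [::]; [::]; [::]; [::]; [::]; [::]; [::]; [::]; [::]; [::]; [::]; [::]; [::]; [::]; [::]; [::]; [::]; [::]; [::]; [::]; [::]; [::]; [::]; [::]; [::]; [::]; [::]; [::]; [::]; [::]; [::]; [::]; [::]; [::]];
[:: [::8; 9; 11]; [::22; 24; 29]; [::23; 25; 26; 30; 31; 34]; [::]; [::]; [::]; [::]; [::]; [::]; [::]; [::]; [::]; [::]; [::]; [::]; [::]; [::]; [::]; [::]; [::]; [::]; [::]; [::]; [::]; [::]; [::]; [::]; [::]; [::]; [::]; [::]; [::]; [::]; [::]; [::]; [::]; [::]; [::]; [::]; [::]; [::]; [::]; [::]; [::]; [::]; [::]; [::]; [::]; [::]; [::]; [::]; [::]; [::]; [::]; [::]; [::]; [::]; [::]; [::]; [::]; [::]; [::]; [::]; [::]];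
[:: [::10; 12]; [::27; 32]; [::28; 33; 35]; [::]; [::]; [::]; [::]; [::]; [::]; [::]; [::]; [::]; [::]; [::]; [::]; [::]; [::]; [::]; [::]; [::]; [::]; [::]; [::]; [::]; [::]; [::]; [::]; [::]; [::]; [::]; [::]; [::]; [::]; [::]; [::]; [::]; [::]; [::]; [::]; [::]; [::]; [::]; [::]; [::]; [::]; [::]; [::]; [::]; [::]; [::]; [::]; [::]; [::]; [::]; [::]; [::]; [::]; [::]; [::]; [::]; [::]; [::]; [::]; [::]];
[:: [::13; 14]; [::36; 38]; [::37; 39; 40]; [::]; [::]; [::]; [::]; [::]; [::]; [::]; [::]; [::]; [::]; [::]; [::]; [::]; [::]; [::]; [::]; [::]; [::]; [::]; [::]; [::]; [::]; [::]; [::]; [::]; [::]; [::]; [::]; [::]; [::]; [::]; [::]; [::]; [::]; [::]; [::]; [::]; [::]; [::]; [::]; [::]; [::]; [::]; [::]; [::]; [::]; [::]; [::]; [::]; [::]; [::]; [::]; [::]; [::]; [::]; [::]; [::]; [::]; [::]; [::]; [::]];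
[:: [::15]; [::41]; [::42]; [::]; [::]; [::]; [::]; [::]; [::]; [::]; [::]; [::]; [::]; [::]; [::]; [::]; [::]; [::]; [::]; [::]; [::]; [::]; [::]; [::]; [::]; [::]; [::]; [::]; [::]; [::]; [::]; [::]; [::]; [::]; [::]; [::]; [::]; [::]; [::]; [::]; [::]; [::]; [::]; [::]; [::]; [::]; [::]; [::]; [::]; [::]; [::]; [::]; [::]; [::]; [::]; [::]; [::]; [::]; [::]; [::]; [::]; [::]; [::]; [::]];
[:: [::18]; [::50]; [::51]; [::]; [::]; [::]; [::]; [::]; [::]; [::]; [::]; [::]; [::]; [::]; [::]; [::]; [::]; [::]; [::]; [::]; [::]; [::]; [::]; [::]; [::]; [::]; [::]; [::]; [::]; [::]; [::]; [::]; [::]; [::]; [::]; [::]; [::]; [::]; [::]; [::]; [::]; [::]; [::]; [::]; [::]; [::]; [::]; [::]; [::]; [::]; [::]; [::]; [::]; [::]; [::]; [::]; [::]; [::]; [::]; [::]; [::]; [::]; [::]; [::]];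
[:: [::22; 23; 25; 30]; [::]; [::]; [::]; [::]; [::]; [::]; [::]; [::]; [::]; [::]; [::]; [::]; [::]; [::]; [::]; [::]; [::]; [::]; [::]; [::]; [::]; [::]; [::]; [::]; [::]; [::]; [::]; [::]; [::]; [::]; [::]; [::]; [::]; [::]; [::]; [::]; [::]; [::]; [::]; [::]; [::]; [::]; [::]; [::]; [::]; [::]; [::]; [::]; [::]; [::]; [::]; [::]; [::]; [::]; [::]; [::]; [::]; [::]; [::]; [::]; [::]; [::]; [::]];
[:: [::24; 26; 31]; [::]; [::]; [::]; [::]; [::]; [::]; [::]; [::]; [::]; [::]; [::]; [::]; [::]; [::]; [::]; [::]; [::]; [::]; [::]; [::]; [::]; [::]; [::]; [::]; [::]; [::]; [::]; [::]; [::]; [::]; [::]; [::]; [::]; [::]; [::]; [::]; [::]; [::]; [::]; [::]; [::]; [::]; [::]; [::]; [::]; [::]; [::]; [::]; [::]; [::]; [::]; [::]; [::]; [::]; [::]; [::]; [::]; [::]; [::]; [::]; [::]; [::]; [::]];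
[:: [::27; 28; 33]; [::]; [::]; [::]; [::]; [::]; [::]; [::]; [::]; [::]; [::]; [::]; [::]; [::]; [::]; [::]; [::]; [::]; [::]; [::]; [::]; [::]; [::]; [::]; [::]; [::]; [::]; [::]; [::]; [::]; [::]; [::]; [::]; [::]; [::]; [::]; [::]; [::]; [::]; [::]; [::]; [::]; [::]; [::]; [::]; [::]; [::]; [::]; [::]; [::]; [::]; [::]; [::]; [::]; [::]; [::]; [::]; [::]; [::]; [::]; [::]; [::]; [::]; [::]];
[:: [::29; 34]; [::]; [::]; [::]; [::]; [::]; [::]; [::]; [::]; [::]; [::]; [::]; [::]; [::]; [::]; [::]; [::]; [::]; [::]; [::]; [::]; [::]; [::]; [::]; [::]; [::]; [::]; [::]; [::]; [::]; [::]; [::]; [::]; [::]; [::]; [::]; [::]; [::]; [::]; [::]; [::]; [::]; [::]; [::]; [::]; [::]; [::]; [::]; [::]; [::]; [::]; [::]; [::]; [::]; [::]; [::]; [::]; [::]; [::]; [::]; [::]; [::]; [::]; [::]];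
[:: [::32; 35]; [::]; [::]; [::]; [::]; [::]; [::]; [::]; [::]; [::]; [::]; [::]; [::]; [::]; [::]; [::]; [::]; [::]; [::]; [::]; [::]; [::]; [::]; [::]; [::]; [::]; [::]; [::]; [::]; [::]; [::]; [::]; [::]; [::]; [::]; [::]; [::]; [::]; [::]; [::]; [::]; [::]; [::]; [::]; [::]; [::]; [::]; [::]; [::]; [::]; [::]; [::]; [::]; [::]; [::]; [::]; [::]; [::]; [::]; [::]; [::]; [::]; [::]; [::]];
[:: [::36; 37; 39]; [::]; [::]; [::]; [::]; [::]; [::]; [::]; [::]; [::]; [::]; [::]; [::]; [::]; [::]; [::]; [::]; [::]; [::]; [::]; [::]; [::]; [::]; [::]; [::]; [::]; [::]; [::]; [::]; [::]; [::]; [::]; [::]; [::]; [::]; [::]; [::]; [::]; [::]; [::]; [::]; [::]; [::]; [::]; [::]; [::]; [::]; [::]; [::]; [::]; [::]; [::]; [::]; [::]; [::]; [::]; [::]; [::]; [::]; [::]; [::]; [::]; [::]; [::]];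
[:: [::38; 40]; [::]; [::]; [::]; [::]; [::]; [::]; [::]; [::]; [::]; [::]; [::]; [::]; [::]; [::]; [::]; [::]; [::]; [::]; [::]; [::]; [::]; [::]; [::]; [::]; [::]; [::]; [::]; [::]; [::]; [::]; [::]; [::]; [::]; [::]; [::]; [::]; [::]; [::]; [::]; [::]; [::]; [::]; [::]; [::]; [::]; [::]; [::]; [::]; [::]; [::]; [::]; [::]; [::]; [::]; [::]; [::]; [::]; [::]; [::]; [::]; [::]; [::]; [::]];
[:: [::41; 42]; [::]; [::]; [::]; [::]; [::]; [::]; [::]; [::]; [::]; [::]; [::]; [::]; [::]; [::]; [::]; [::]; [::]; [::]; [::]; [::]; [::]; [::]; [::]; [::]; [::]; [::]; [::]; [::]; [::]; [::]; [::]; [::]; [::]; [::]; [::]; [::]; [::]; [::]; [::]; [::]; [::]; [::]; [::]; [::]; [::]; [::]; [::]; [::]; [::]; [::]; [::]; [::]; [::]; [::]; [::]; [::]; [::]; [::]; [::]; [::]; [::]; [::]; [::]];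
[:: [::43]; [::]; [::]; [::]; [::]; [::]; [::]; [::]; [::]; [::]; [::]; [::]; [::]; [::]; [::]; [::]; [::]; [::]; [::]; [::]; [::]; [::]; [::]; [::]; [::]; [::]; [::]; [::]; [::]; [::]; [::]; [::]; [::]; [::]; [::]; [::]; [::]; [::]; [::]; [::]; [::]; [::]; [::]; [::]; [::]; [::]; [::]; [::]; [::]; [::]; [::]; [::]; [::]; [::]; [::]; [::]; [::]; [::]; [::]; [::]; [::]; [::]; [::]; [::]];
[:: [::46]; [::]; [::]; [::]; [::]; [::]; [::]; [::]; [::]; [::]; [::]; [::]; [::]; [::]; [::]; [::]; [::]; [::]; [::]; [::]; [::]; [::]; [::]; [::]; [::]; [::]; [::]; [::]; [::]; [::]; [::]; [::]; [::]; [::]; [::]; [::]; [::]; [::]; [::]; [::]; [::]; [::]; [::]; [::]; [::]; [::]; [::]; [::]; [::]; [::]; [::]; [::]; [::]; [::]; [::]; [::]; [::]; [::]; [::]; [::]; [::]; [::]; [::]; [::]];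
[:: [::50; 51]; [::]; [::]; [::]; [::]; [::]; [::]; [::]; [::]; [::]; [::]; [::]; [::]; [::]; [::]; [::]; [::]; [::]; [::]; [::]; [::]; [::]; [::]; [::]; [::]; [::]; [::]; [::]; [::]; [::]; [::]; [::]; [::]; [::]; [::]; [::]; [::]; [::]; [::]; [::]; [::]; [::]; [::]; [::]; [::]; [::]; [::]; [::]; [::]; [::]; [::]; [::]; [::]; [::]; [::]; [::]; [::]; [::]; [::]; [::]; [::]; [::]; [::]; [::]];
[:: [::52]; [::]; [::]; [::]; [::]; [::]; [::]; [::]; [::]; [::]; [::]; [::]; [::]; [::]; [::]; [::]; [::]; [::]; [::]; [::]; [::]; [::]; [::]; [::]; [::]; [::]; [::]; [::]; [::]; [::]; [::]; [::]; [::]; [::]; [::]; [::]; [::]; [::]; [::]; [::]; [::]; [::]; [::]; [::]; [::]; [::]; [::]; [::]; [::]; [::]; [::]; [::]; [::]; [::]; [::]; [::]; [::]; [::]; [::]; [::]; [::]; [::]; [::]; [::]];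
[:: [::55]; [::]; [::]; [::]; [::]; [::]; [::]; [::]; [::]; [::]; [::]; [::]; [::]; [::]; [::]; [::]; [::]; [::]; [::]; [::]; [::]; [::]; [::]; [::]; [::]; [::]; [::]; [::]; [::]; [::]; [::]; [::]; [::]; [::]; [::]; [::]; [::]; [::]; [::]; [::]; [::]; [::]; [::]; [::]; [::]; [::]; [::]; [::]; [::]; [::]; [::]; [::]; [::]; [::]; [::]; [::]; [::]; [::]; [::]; [::]; [::]; [::]; [::]; [::]];
[:: [::59]; [::]; [::]; [::]; [::]; [::]; [::]; [::]; [::]; [::]; [::]; [::]; [::]; [::]; [::]; [::]; [::]; [::]; [::]; [::]; [::]; [::]; [::]; [::]; [::]; [::]; [::]; [::]; [::]; [::]; [::]; [::]; [::]; [::]; [::]; [::]; [::]; [::]; [::]; [::]; [::]; [::]; [::]; [::]; [::]; [::]; [::]; [::]; [::]; [::]; [::]; [::]; [::]; [::]; [::]; [::]; [::]; [::]; [::]; [::]; [::]; [::]; [::]; [::]];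
[:: [::]; [::]; [::]; [::]; [::]; [::]; [::]; [::]; [::]; [::]; [::]; [::]; [::]; [::]; [::]; [::]; [::]; [::]; [::]; [::]; [::]; [::]; [::]; [::]; [::]; [::]; [::]; [::]; [::]; [::]; [::]; [::]; [::]; [::]; [::]; [::]; [::]; [::]; [::]; [::]; [::]; [::]; [::]; [::]; [::]; [::]; [::]; [::]; [::]; [::]; [::]; [::]; [::]; [::]; [::]; [::]; [::]; [::]; [::]; [::]; [::]; [::]; [::]; [::]];
[:: [::]; [::]; [::]; [::]; [::]; [::]; [::]; [::]; [::]; [::]; [::]; [::]; [::]; [::]; [::]; [::]; [::]; [::]; [::]; [::]; [::]; [::]; [::]; [::]; [::]; [::]; [::]; [::]; [::]; [::]; [::]; [::]; [::]; [::]; [::]; [::]; [::]; [::]; [::]; [::]; [::]; [::]; [::]; [::]; [::]; [::]; [::]; [::]; [::]; [::]; [::]; [::]; [::]; [::]; [::]; [::]; [::]; [::]; [::]; [::]; [::]; [::]; [::]; [::]];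
[:: [::]; [::]; [::]; [::]; [::]; [::]; [::]; [::]; [::]; [::]; [::]; [::]; [::]; [::]; [::]; [::]; [::]; [::]; [::]; [::]; [::]; [::]; [::]; [::]; [::]; [::]; [::]; [::]; [::]; [::]; [::]; [::]; [::]; [::]; [::]; [::]; [::]; [::]; [::]; [::]; [::]; [::]; [::]; [::]; [::]; [::]; [::]; [::]; [::]; [::]; [::]; [::]; [::]; [::]; [::]; [::]; [::]; [::]; [::]; [::]; [::]; [::]; [::]; [::]];
[:: [::]; [::]; [::]; [::]; [::]; [::]; [::]; [::]; [::]; [::]; [::]; [::]; [::]; [::]; [::]; [::]; [::]; [::]; [::]; [::]; [::]; [::]; [::]; [::]; [::]; [::]; [::]; [::]; [::]; [::]; [::]; [::]; [::]; [::]; [::]; [::]; [::]; [::]; [::]; [::]; [::]; [::]; [::]; [::]; [::]; [::]; [::]; [::]; [::]; [::]; [::]; [::]; [::]; [::]; [::]; [::]; [::]; [::]; [::]; [::]; [::]; [::]; [::]; [::]];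
[:: [::]; [::]; [::]; [::]; [::]; [::]; [::]; [::]; [::]; [::]; [::]; [::]; [::]; [::]; [::]; [::]; [::]; [::]; [::]; [::]; [::]; [::]; [::]; [::]; [::]; [::]; [::]; [::]; [::]; [::]; [::]; [::]; [::]; [::]; [::]; [::]; [::]; [::]; [::]; [::]; [::]; [::]; [::]; [::]; [::]; [::]; [::]; [::]; [::]; [::]; [::]; [::]; [::]; [::]; [::]; [::]; [::]; [::]; [::]; [::]; [::]; [::]; [::]; [::]];
[:: [::]; [::]; [::]; [::]; [::]; [::]; [::]; [::]; [::]; [::]; [::]; [::]; [::]; [::]; [::]; [::]; [::]; [::]; [::]; [::]; [::]; [::]; [::]; [::]; [::]; [::]; [::]; [::]; [::]; [::]; [::]; [::]; [::]; [::]; [::]; [::]; [::]; [::]; [::]; [::]; [::]; [::]; [::]; [::]; [::]; [::]; [::]; [::]; [::]; [::]; [::]; [::]; [::]; [::]; [::]; [::]; [::]; [::]; [::]; [::]; [::]; [::]; [::]; [::]];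
[:: [::]; [::]; [::]; [::]; [::]; [::]; [::]; [::]; [::]; [::]; [::]; [::]; [::]; [::]; [::]; [::]; [::]; [::]; [::]; [::]; [::]; [::]; [::]; [::]; [::]; [::]; [::]; [::]; [::]; [::]; [::]; [::]; [::]; [::]; [::]; [::]; [::]; [::]; [::]; [::]; [::]; [::]; [::]; [::]; [::]; [::]; [::]; [::]; [::]; [::]; [::]; [::]; [::]; [::]; [::]; [::]; [::]; [::]; [::]; [::]; [::]; [::]; [::]; [::]];
[:: [::]; [::]; [::]; [::]; [::]; [::]; [::]; [::]; [::]; [::]; [::]; [::]; [::]; [::]; [::]; [::]; [::]; [::]; [::]; [::]; [::]; [::]; [::]; [::]; [::]; [::]; [::]; [::]; [::]; [::]; [::]; [::]; [::]; [::]; [::]; [::]; [::]; [::]; [::]; [::]; [::]; [::]; [::]; [::]; [::]; [::]; [::]; [::]; [::]; [::]; [::]; [::]; [::]; [::]; [::]; [::]; [::]; [::]; [::]; [::]; [::]; [::]; [::]; [::]];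
[:: [::]; [::]; [::]; [::]; [::]; [::]; [::]; [::]; [::]; [::]; [::]; [::]; [::]; [::]; [::]; [::]; [::]; [::]; [::]; [::]; [::]; [::]; [::]; [::]; [::]; [::]; [::]; [::]; [::]; [::]; [::]; [::]; [::]; [::]; [::]; [::]; [::]; [::]; [::]; [::]; [::]; [::]; [::]; [::]; [::]; [::]; [::]; [::]; [::]; [::]; [::]; [::]; [::]; [::]; [::]; [::]; [::]; [::]; [::]; [::]; [::]; [::]; [::]; [::]];
[:: [::]; [::]; [::]; [::]; [::]; [::]; [::]; [::]; [::]; [::]; [::]; [::]; [::]; [::]; [::]; [::]; [::]; [::]; [::]; [::]; [::]; [::]; [::]; [::]; [::]; [::]; [::]; [::]; [::]; [::]; [::]; [::]; [::]; [::]; [::]; [::]; [::]; [::]; [::]; [::]; [::]; [::]; [::]; [::]; [::]; [::]; [::]; [::]; [::]; [::]; [::]; [::]; [::]; [::]; [::]; [::]; [::]; [::]; [::]; [::]; [::]; [::]; [::]; [::]];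
[:: [::]; [::]; [::]; [::]; [::]; [::]; [::]; [::]; [::]; [::]; [::]; [::]; [::]; [::]; [::]; [::]; [::]; [::]; [::]; [::]; [::]; [::]; [::]; [::]; [::]; [::]; [::]; [::]; [::]; [::]; [::]; [::]; [::]; [::]; [::]; [::]; [::]; [::]; [::]; [::]; [::]; [::]; [::]; [::]; [::]; [::]; [::]; [::]; [::]; [::]; [::]; [::]; [::]; [::]; [::]; [::]; [::]; [::]; [::]; [::]; [::]; [::]; [::]; [::]];
[:: [::]; [::]; [::]; [::]; [::]; [::]; [::]; [::]; [::]; [::]; [::]; [::]; [::]; [::]; [::]; [::]; [::]; [::]; [::]; [::]; [::]; [::]; [::]; [::]; [::]; [::]; [::]; [::]; [::]; [::]; [::]; [::]; [::]; [::]; [::]; [::]; [::]; [::]; [::]; [::]; [::]; [::]; [::]; [::]; [::]; [::]; [::]; [::]; [::]; [::]; [::]; [::]; [::]; [::]; [::]; [::]; [::]; [::]; [::]; [::]; [::]; [::]; [::]; [::]];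
[:: [::]; [::]; [::]; [::]; [::]; [::]; [::]; [::]; [::]; [::]; [::]; [::]; [::]; [::]; [::]; [::]; [::]; [::]; [::]; [::]; [::]; [::]; [::]; [::]; [::]; [::]; [::]; [::]; [::]; [::]; [::]; [::]; [::]; [::]; [::]; [::]; [::]; [::]; [::]; [::]; [::]; [::]; [::]; [::]; [::]; [::]; [::]; [::]; [::]; [::]; [::]; [::]; [::]; [::]; [::]; [::]; [::]; [::]; [::]; [::]; [::]; [::]; [::]; [::]];
[:: [::]; [::]; [::]; [::]; [::]; [::]; [::]; [::]; [::]; [::]; [::]; [::]; [::]; [::]; [::]; [::]; [::]; [::]; [::]; [::]; [::]; [::]; [::]; [::]; [::]; [::]; [::]; [::]; [::]; [::]; [::]; [::]; [::]; [::]; [::]; [::]; [::]; [::]; [::]; [::]; [::]; [::]; [::]; [::]; [::]; [::]; [::]; [::]; [::]; [::]; [::]; [::]; [::]; [::]; [::]; [::]; [::]; [::]; [::]; [::]; [::]; [::]; [::]; [::]];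
[:: [::]; [::]; [::]; [::]; [::]; [::]; [::]; [::]; [::]; [::]; [::]; [::]; [::]; [::]; [::]; [::]; [::]; [::]; [::]; [::]; [::]; [::]; [::]; [::]; [::]; [::]; [::]; [::]; [::]; [::]; [::]; [::]; [::]; [::]; [::]; [::]; [::]; [::]; [::]; [::]; [::]; [::]; [::]; [::]; [::]; [::]; [::]; [::]; [::]; [::]; [::]; [::]; [::]; [::]; [::]; [::]; [::]; [::]; [::]; [::]; [::]; [::]; [::]; [::]];
[:: [::]; [::]; [::]; [::]; [::]; [::]; [::]; [::]; [::]; [::]; [::]; [::]; [::]; [::]; [::]; [::]; [::]; [::]; [::]; [::]; [::]; [::]; [::]; [::]; [::]; [::]; [::]; [::]; [::]; [::]; [::]; [::]; [::]; [::]; [::]; [::]; [::]; [::]; [::]; [::]; [::]; [::]; [::]; [::]; [::]; [::]; [::]; [::]; [::]; [::]; [::]; [::]; [::]; [::]; [::]; [::]; [::]; [::]; [::]; [::]; [::]; [::]; [::]; [::]];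
[:: [::]; [::]; [::]; [::]; [::]; [::]; [::]; [::]; [::]; [::]; [::]; [::]; [::]; [::]; [::]; [::]; [::]; [::]; [::]; [::]; [::]; [::]; [::]; [::]; [::]; [::]; [::]; [::]; [::]; [::]; [::]; [::]; [::]; [::]; [::]; [::]; [::]; [::]; [::]; [::]; [::]; [::]; [::]; [::]; [::]; [::]; [::]; [::]; [::]; [::]; [::]; [::]; [::]; [::]; [::]; [::]; [::]; [::]; [::]; [::]; [::]; [::]; [::]; [::]];
[:: [::]; [::]; [::]; [::]; [::]; [::]; [::]; [::]; [::]; [::]; [::]; [::]; [::]; [::]; [::]; [::]; [::]; [::]; [::]; [::]; [::]; [::]; [::]; [::]; [::]; [::]; [::]; [::]; [::]; [::]; [::]; [::]; [::]; [::]; [::]; [::]; [::]; [::]; [::]; [::]; [::]; [::]; [::]; [::]; [::]; [::]; [::]; [::]; [::]; [::]; [::]; [::]; [::]; [::]; [::]; [::]; [::]; [::]; [::]; [::]; [::]; [::]; [::]; [::]];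
[:: [::]; [::]; [::]; [::]; [::]; [::]; [::]; [::]; [::]; [::]; [::]; [::]; [::]; [::]; [::]; [::]; [::]; [::]; [::]; [::]; [::]; [::]; [::]; [::]; [::]; [::]; [::]; [::]; [::]; [::]; [::]; [::]; [::]; [::]; [::]; [::]; [::]; [::]; [::]; [::]; [::]; [::]; [::]; [::]; [::]; [::]; [::]; [::]; [::]; [::]; [::]; [::]; [::]; [::]; [::]; [::]; [::]; [::]; [::]; [::]; [::]; [::]; [::]; [::]];
[:: [::]; [::]; [::]; [::]; [::]; [::]; [::]; [::]; [::]; [::]; [::]; [::]; [::]; [::]; [::]; [::]; [::]; [::]; [::]; [::]; [::]; [::]; [::]; [::]; [::]; [::]; [::]; [::]; [::]; [::]; [::]; [::]; [::]; [::]; [::]; [::]; [::]; [::]; [::]; [::]; [::]; [::]; [::]; [::]; [::]; [::]; [::]; [::]; [::]; [::]; [::]; [::]; [::]; [::]; [::]; [::]; [::]; [::]; [::]; [::]; [::]; [::]; [::]; [::]];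
[:: [::]; [::]; [::]; [::]; [::]; [::]; [::]; [::]; [::]; [::]; [::]; [::]; [::]; [::]; [::]; [::]; [::]; [::]; [::]; [::]; [::]; [::]; [::]; [::]; [::]; [::]; [::]; [::]; [::]; [::]; [::]; [::]; [::]; [::]; [::]; [::]; [::]; [::]; [::]; [::]; [::]; [::]; [::]; [::]; [::]; [::]; [::]; [::]; [::]; [::]; [::]; [::]; [::]; [::]; [::]; [::]; [::]; [::]; [::]; [::]; [::]; [::]; [::]; [::]];
[:: [::]; [::]; [::]; [::]; [::]; [::]; [::]; [::]; [::]; [::]; [::]; [::]; [::]; [::]; [::]; [::]; [::]; [::]; [::]; [::]; [::]; [::]; [::]; [::]; [::]; [::]; [::]; [::]; [::]; [::]; [::]; [::]; [::]; [::]; [::]; [::]; [::]; [::]; [::]; [::]; [::]; [::]; [::]; [::]; [::]; [::]; [::]; [::]; [::]; [::]; [::]; [::]; [::]; [::]; [::]; [::]; [::]; [::]; [::]; [::]; [::]; [::]; [::]; [::]];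
[:: [::]; [::]; [::]; [::]; [::]; [::]; [::]; [::]; [::]; [::]; [::]; [::]; [::]; [::]; [::]; [::]; [::]; [::]; [::]; [::]; [::]; [::]; [::]; [::]; [::]; [::]; [::]; [::]; [::]; [::]; [::]; [::]; [::]; [::]; [::]; [::]; [::]; [::]; [::]; [::]; [::]; [::]; [::]; [::]; [::]; [::]; [::]; [::]; [::]; [::]; [::]; [::]; [::]; [::]; [::]; [::]; [::]; [::]; [::]; [::]; [::]; [::]; [::]; [::]];
[:: [::]; [::]; [::]; [::]; [::]; [::]; [::]; [::]; [::]; [::]; [::]; [::]; [::]; [::]; [::]; [::]; [::]; [::]; [::]; [::]; [::]; [::]; [::]; [::]; [::]; [::]; [::]; [::]; [::]; [::]; [::]; [::]; [::]; [::]; [::]; [::]; [::]; [::]; [::]; [::]; [::]; [::]; [::]; [::]; [::]; [::]; [::]; [::]; [::]; [::]; [::]; [::]; [::]; [::]; [::]; [::]; [::]; [::]; [::]; [::]; [::]; [::]; [::]; [::]];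
[:: [::]; [::]; [::]; [::]; [::]; [::]; [::]; [::]; [::]; [::]; [::]; [::]; [::]; [::]; [::]; [::]; [::]; [::]; [::]; [::]; [::]; [::]; [::]; [::]; [::]; [::]; [::]; [::]; [::]; [::]; [::]; [::]; [::]; [::]; [::]; [::]; [::]; [::]; [::]; [::]; [::]; [::]; [::]; [::]; [::]; [::]; [::]; [::]; [::]; [::]; [::]; [::]; [::]; [::]; [::]; [::]; [::]; [::]; [::]; [::]; [::]; [::]; [::]; [::]];
[:: [::]; [::]; [::]; [::]; [::]; [::]; [::]; [::]; [::]; [::]; [::]; [::]; [::]; [::]; [::]; [::]; [::]; [::]; [::]; [::]; [::]; [::]; [::]; [::]; [::]; [::]; [::]; [::]; [::]; [::]; [::]; [::]; [::]; [::]; [::]; [::]; [::]; [::]; [::]; [::]; [::]; [::]; [::]; [::]; [::]; [::]; [::]; [::]; [::]; [::]; [::]; [::]; [::]; [::]; [::]; [::]; [::]; [::]; [::]; [::]; [::]; [::]; [::]; [::]];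
[:: [::]; [::]; [::]; [::]; [::]; [::]; [::]; [::]; [::]; [::]; [::]; [::]; [::]; [::]; [::]; [::]; [::]; [::]; [::]; [::]; [::]; [::]; [::]; [::]; [::]; [::]; [::]; [::]; [::]; [::]; [::]; [::]; [::]; [::]; [::]; [::]; [::]; [::]; [::]; [::]; [::]; [::]; [::]; [::]; [::]; [::]; [::]; [::]; [::]; [::]; [::]; [::]; [::]; [::]; [::]; [::]; [::]; [::]; [::]; [::]; [::]; [::]; [::]; [::]];
[:: [::]; [::]; [::]; [::]; [::]; [::]; [::]; [::]; [::]; [::]; [::]; [::]; [::]; [::]; [::]; [::]; [::]; [::]; [::]; [::]; [::]; [::]; [::]; [::]; [::]; [::]; [::]; [::]; [::]; [::]; [::]; [::]; [::]; [::]; [::]; [::]; [::]; [::]; [::]; [::]; [::]; [::]; [::]; [::]; [::]; [::]; [::]; [::]; [::]; [::]; [::]; [::]; [::]; [::]; [::]; [::]; [::]; [::]; [::]; [::]; [::]; [::]; [::]; [::]];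
[:: [::]; [::]; [::]; [::]; [::]; [::]; [::]; [::]; [::]; [::]; [::]; [::]; [::]; [::]; [::]; [::]; [::]; [::]; [::]; [::]; [::]; [::]; [::]; [::]; [::]; [::]; [::]; [::]; [::]; [::]; [::]; [::]; [::]; [::]; [::]; [::]; [::]; [::]; [::]; [::]; [::]; [::]; [::]; [::]; [::]; [::]; [::]; [::]; [::]; [::]; [::]; [::]; [::]; [::]; [::]; [::]; [::]; [::]; [::]; [::]; [::]; [::]; [::]; [::]];
[:: [::]; [::]; [::]; [::]; [::]; [::]; [::]; [::]; [::]; [::]; [::]; [::]; [::]; [::]; [::]; [::]; [::]; [::]; [::]; [::]; [::]; [::]; [::]; [::]; [::]; [::]; [::]; [::]; [::]; [::]; [::]; [::]; [::]; [::]; [::]; [::]; [::]; [::]; [::]; [::]; [::]; [::]; [::]; [::]; [::]; [::]; [::]; [::]; [::]; [::]; [::]; [::]; [::]; [::]; [::]; [::]; [::]; [::]; [::]; [::]; [::]; [::]; [::]; [::]];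
[:: [::]; [::]; [::]; [::]; [::]; [::]; [::]; [::]; [::]; [::]; [::]; [::]; [::]; [::]; [::]; [::]; [::]; [::]; [::]; [::]; [::]; [::]; [::]; [::]; [::]; [::]; [::]; [::]; [::]; [::]; [::]; [::]; [::]; [::]; [::]; [::]; [::]; [::]; [::]; [::]; [::]; [::]; [::]; [::]; [::]; [::]; [::]; [::]; [::]; [::]; [::]; [::]; [::]; [::]; [::]; [::]; [::]; [::]; [::]; [::]; [::]; [::]; [::]; [::]];
[:: [::]; [::]; [::]; [::]; [::]; [::]; [::]; [::]; [::]; [::]; [::]; [::]; [::]; [::]; [::]; [::]; [::]; [::]; [::]; [::]; [::]; [::]; [::]; [::]; [::]; [::]; [::]; [::]; [::]; [::]; [::]; [::]; [::]; [::]; [::]; [::]; [::]; [::]; [::]; [::]; [::]; [::]; [::]; [::]; [::]; [::]; [::]; [::]; [::]; [::]; [::]; [::]; [::]; [::]; [::]; [::]; [::]; [::]; [::]; [::]; [::]; [::]; [::]; [::]];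
[:: [::]; [::]; [::]; [::]; [::]; [::]; [::]; [::]; [::]; [::]; [::]; [::]; [::]; [::]; [::]; [::]; [::]; [::]; [::]; [::]; [::]; [::]; [::]; [::]; [::]; [::]; [::]; [::]; [::]; [::]; [::]; [::]; [::]; [::]; [::]; [::]; [::]; [::]; [::]; [::]; [::]; [::]; [::]; [::]; [::]; [::]; [::]; [::]; [::]; [::]; [::]; [::]; [::]; [::]; [::]; [::]; [::]; [::]; [::]; [::]; [::]; [::]; [::]; [::]];
[:: [::]; [::]; [::]; [::]; [::]; [::]; [::]; [::]; [::]; [::]; [::]; [::]; [::]; [::]; [::]; [::]; [::]; [::]; [::]; [::]; [::]; [::]; [::]; [::]; [::]; [::]; [::]; [::]; [::]; [::]; [::]; [::]; [::]; [::]; [::]; [::]; [::]; [::]; [::]; [::]; [::]; [::]; [::]; [::]; [::]; [::]; [::]; [::]; [::]; [::]; [::]; [::]; [::]; [::]; [::]; [::]; [::]; [::]; [::]; [::]; [::]; [::]; [::]; [::]];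
[:: [::]; [::]; [::]; [::]; [::]; [::]; [::]; [::]; [::]; [::]; [::]; [::]; [::]; [::]; [::]; [::]; [::]; [::]; [::]; [::]; [::]; [::]; [::]; [::]; [::]; [::]; [::]; [::]; [::]; [::]; [::]; [::]; [::]; [::]; [::]; [::]; [::]; [::]; [::]; [::]; [::]; [::]; [::]; [::]; [::]; [::]; [::]; [::]; [::]; [::]; [::]; [::]; [::]; [::]; [::]; [::]; [::]; [::]; [::]; [::]; [::]; [::]; [::]; [::]];
[:: [::]; [::]; [::]; [::]; [::]; [::]; [::]; [::]; [::]; [::]; [::]; [::]; [::]; [::]; [::]; [::]; [::]; [::]; [::]; [::]; [::]; [::]; [::]; [::]; [::]; [::]; [::]; [::]; [::]; [::]; [::]; [::]; [::]; [::]; [::]; [::]; [::]; [::]; [::]; [::]; [::]; [::]; [::]; [::]; [::]; [::]; [::]; [::]; [::]; [::]; [::]; [::]; [::]; [::]; [::]; [::]; [::]; [::]; [::]; [::]; [::]; [::]; [::]; [::]];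
[:: [::]; [::]; [::]; [::]; [::]; [::]; [::]; [::]; [::]; [::]; [::]; [::]; [::]; [::]; [::]; [::]; [::]; [::]; [::]; [::]; [::]; [::]; [::]; [::]; [::]; [::]; [::]; [::]; [::]; [::]; [::]; [::]; [::]; [::]; [::]; [::]; [::]; [::]; [::]; [::]; [::]; [::]; [::]; [::]; [::]; [::]; [::]; [::]; [::]; [::]; [::]; [::]; [::]; [::]; [::]; [::]; [::]; [::]; [::]; [::]; [::]; [::]; [::]; [::]];
[:: [::]; [::]; [::]; [::]; [::]; [::]; [::]; [::]; [::]; [::]; [::]; [::]; [::]; [::]; [::]; [::]; [::]; [::]; [::]; [::]; [::]; [::]; [::]; [::]; [::]; [::]; [::]; [::]; [::]; [::]; [::]; [::]; [::]; [::]; [::]; [::]; [::]; [::]; [::]; [::]; [::]; [::]; [::]; [::]; [::]; [::]; [::]; [::]; [::]; [::]; [::]; [::]; [::]; [::]; [::]; [::]; [::]; [::]; [::]; [::]; [::]; [::]; [::]; [::]];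
[:: [::]; [::]; [::]; [::]; [::]; [::]; [::]; [::]; [::]; [::]; [::]; [::]; [::]; [::]; [::]; [::]; [::]; [::]; [::]; [::]; [::]; [::]; [::]; [::]; [::]; [::]; [::]; [::]; [::]; [::]; [::]; [::]; [::]; [::]; [::]; [::]; [::]; [::]; [::]; [::]; [::]; [::]; [::]; [::]; [::]; [::]; [::]; [::]; [::]; [::]; [::]; [::]; [::]; [::]; [::]; [::]; [::]; [::]; [::]; [::]; [::]; [::]; [::]; [::]];
[:: [::]; [::]; [::]; [::]; [::]; [::]; [::]; [::]; [::]; [::]; [::]; [::]; [::]; [::]; [::]; [::]; [::]; [::]; [::]; [::]; [::]; [::]; [::]; [::]; [::]; [::]; [::]; [::]; [::]; [::]; [::]; [::]; [::]; [::]; [::]; [::]; [::]; [::]; [::]; [::]; [::]; [::]; [::]; [::]; [::]; [::]; [::]; [::]; [::]; [::]; [::]; [::]; [::]; [::]; [::]; [::]; [::]; [::]; [::]; [::]; [::]; [::]; [::]; [::]];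
[:: [::]; [::]; [::]; [::]; [::]; [::]; [::]; [::]; [::]; [::]; [::]; [::]; [::]; [::]; [::]; [::]; [::]; [::]; [::]; [::]; [::]; [::]; [::]; [::]; [::]; [::]; [::]; [::]; [::]; [::]; [::]; [::]; [::]; [::]; [::]; [::]; [::]; [::]; [::]; [::]; [::]; [::]; [::]; [::]; [::]; [::]; [::]; [::]; [::]; [::]; [::]; [::]; [::]; [::]; [::]; [::]; [::]; [::]; [::]; [::]; [::]; [::]; [::]; [::]];
[:: [::]; [::]; [::]; [::]; [::]; [::]; [::]; [::]; [::]; [::]; [::]; [::]; [::]; [::]; [::]; [::]; [::]; [::]; [::]; [::]; [::]; [::]; [::]; [::]; [::]; [::]; [::]; [::]; [::]; [::]; [::]; [::]; [::]; [::]; [::]; [::]; [::]; [::]; [::]; [::]; [::]; [::]; [::]; [::]; [::]; [::]; [::]; [::]; [::]; [::]; [::]; [::]; [::]; [::]; [::]; [::]; [::]; [::]; [::]; [::]; [::]; [::]; [::]; [::]]].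
Definition Tsl : seq (seq (seq nat)) := [::
[:: [::2]; [::5]; [::6; 7]; [::13]; [::14]; [::15; 18]; [::16; 19]; [::17; 20; 21]; [::36]; [::37]; [::38]; [::39]; [::40]; [::41; 50]; [::42; 51]; [::43; 52]; [::44; 53]; [::45; 54]; [::46; 55; 59]; [::47; 56; 60]; [::48; 57; 61]; [::49; 58; 62; 63]; [::]; [::]; [::]; [::]; [::]; [::]; [::]; [::]; [::]; [::]; [::]; [::]; [::]; [::]; [::]; [::]; [::]; [::]; [::]; [::]; [::]; [::]; [::]; [::]; [::]; [::]; [::]; [::]; [::]; [::]; [::]; [::]; [::]; [::]; [::]; [::]; [::]; [::]; [::]; [::]; [::]; [::]];
[:: [::6]; [::15]; [::16; 17; 20]; [::41]; [::42]; [::43; 46; 55]; [::44; 47; 56]; [::45; 48; 49; 57; 58; 62]; [::]; [::]; [::]; [::]; [::]; [::]; [::]; [::]; [::]; [::]; [::]; [::]; [::]; [::]; [::]; [::]; [::]; [::]; [::]; [::]; [::]; [::]; [::]; [::]; [::]; [::]; [::]; [::]; [::]; [::]; [::]; [::]; [::]; [::]; [::]; [::]; [::]; [::]; [::]; [::]; [::]; [::]; [::]; [::]; [::]; [::]; [::]; [::]; [::]; [::]; [::]; [::]; [::]; [::]; [::]; [::]];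
[:: [::7]; [::18]; [::19; 21]; [::50]; [::51]; [::52; 59]; [::53; 60]; [::54; 61; 63]; [::]; [::]; [::]; [::]; [::]; [::]; [::]; [::]; [::]; [::]; [::]; [::]; [::]; [::]; [::]; [::]; [::]; [::]; [::]; [::]; [::]; [::]; [::]; [::]; [::]; [::]; [::]; [::]; [::]; [::]; [::]; [::]; [::]; [::]; [::]; [::]; [::]; [::]; [::]; [::]; [::]; [::]; [::]; [::]; [::]; [::]; [::]; [::]; [::]; [::]; [::]; [::]; [::]; [::]; [::]; [::]];
[:: [::16]; [::43]; [::44; 45; 48; 57]; [::]; [::]; [::]; [::]; [::]; [::]; [::]; [::]; [::]; [::]; [::]; [::]; [::]; [::]; [::]; [::]; [::]; [::]; [::]; [::]; [::]; [::]; [::]; [::]; [::]; [::]; [::]; [::]; [::]; [::]; [::]; [::]; [::]; [::]; [::]; [::]; [::]; [::]; [::]; [::]; [::]; [::]; [::]; [::]; [::]; [::]; [::]; [::]; [::]; [::]; [::]; [::]; [::]; [::]; [::]; [::]; [::]; [::]; [::]; [::]; [::]];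
[:: [::17]; [::46]; [::47; 49; 58]; [::]; [::]; [::]; [::]; [::]; [::]; [::]; [::]; [::]; [::]; [::]; [::]; [::]; [::]; [::]; [::]; [::]; [::]; [::]; [::]; [::]; [::]; [::]; [::]; [::]; [::]; [::]; [::]; [::]; [::]; [::]; [::]; [::]; [::]; [::]; [::]; [::]; [::]; [::]; [::]; [::]; [::]; [::]; [::]; [::]; [::]; [::]; [::]; [::]; [::]; [::]; [::]; [::]; [::]; [::]; [::]; [::]; [::]; [::]; [::]; [::]];
[:: [::19]; [::52]; [::53; 54; 61]; [::]; [::]; [::]; [::]; [::]; [::]; [::]; [::]; [::]; [::]; [::]; [::]; [::]; [::]; [::]; [::]; [::]; [::]; [::]; [::]; [::]; [::]; [::]; [::]; [::]; [::]; [::]; [::]; [::]; [::]; [::]; [::]; [::]; [::]; [::]; [::]; [::]; [::]; [::]; [::]; [::]; [::]; [::]; [::]; [::]; [::]; [::]; [::]; [::]; [::]; [::]; [::]; [::]; [::]; [::]; [::]; [::]; [::]; [::]; [::]; [::]];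
[:: [::20]; [::55]; [::56; 62]; [::]; [::]; [::]; [::]; [::]; [::]; [::]; [::]; [::]; [::]; [::]; [::]; [::]; [::]; [::]; [::]; [::]; [::]; [::]; [::]; [::]; [::]; [::]; [::]; [::]; [::]; [::]; [::]; [::]; [::]; [::]; [::]; [::]; [::]; [::]; [::]; [::]; [::]; [::]; [::]; [::]; [::]; [::]; [::]; [::]; [::]; [::]; [::]; [::]; [::]; [::]; [::]; [::]; [::]; [::]; [::]; [::]; [::]; [::]; [::]; [::]];
[:: [::21]; [::59]; [::60; 63]; [::]; [::]; [::]; [::]; [::]; [::]; [::]; [::]; [::]; [::]; [::]; [::]; [::]; [::]; [::]; [::]; [::]; [::]; [::]; [::]; [::]; [::]; [::]; [::]; [::]; [::]; [::]; [::]; [::]; [::]; [::]; [::]; [::]; [::]; [::]; [::]; [::]; [::]; [::]; [::]; [::]; [::]; [::]; [::]; [::]; [::]; [::]; [::]; [::]; [::]; [::]; [::]; [::]; [::]; [::]; [::]; [::]; [::]; [::]; [::]; [::]];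
[:: [::44]; [::]; [::]; [::]; [::]; [::]; [::]; [::]; [::]; [::]; [::]; [::]; [::]; [::]; [::]; [::]; [::]; [::]; [::]; [::]; [::]; [::]; [::]; [::]; [::]; [::]; [::]; [::]; [::]; [::]; [::]; [::]; [::]; [::]; [::]; [::]; [::]; [::]; [::]; [::]; [::]; [::]; [::]; [::]; [::]; [::]; [::]; [::]; [::]; [::]; [::]; [::]; [::]; [::]; [::]; [::]; [::]; [::]; [::]; [::]; [::]; [::]; [::]; [::]];
[:: [::45]; [::]; [::]; [::]; [::]; [::]; [::]; [::]; [::]; [::]; [::]; [::]; [::]; [::]; [::]; [::]; [::]; [::]; [::]; [::]; [::]; [::]; [::]; [::]; [::]; [::]; [::]; [::]; [::]; [::]; [::]; [::]; [::]; [::]; [::]; [::]; [::]; [::]; [::]; [::]; [::]; [::]; [::]; [::]; [::]; [::]; [::]; [::]; [::]; [::]; [::]; [::]; [::]; [::]; [::]; [::]; [::]; [::]; [::]; [::]; [::]; [::]; [::]; [::]];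
[:: [::47]; [::]; [::]; [::]; [::]; [::]; [::]; [::]; [::]; [::]; [::]; [::]; [::]; [::]; [::]; [::]; [::]; [::]; [::]; [::]; [::]; [::]; [::]; [::]; [::]; [::]; [::]; [::]; [::]; [::]; [::]; [::]; [::]; [::]; [::]; [::]; [::]; [::]; [::]; [::]; [::]; [::]; [::]; [::]; [::]; [::]; [::]; [::]; [::]; [::]; [::]; [::]; [::]; [::]; [::]; [::]; [::]; [::]; [::]; [::]; [::]; [::]; [::]; [::]];
[:: [::48]; [::]; [::]; [::]; [::]; [::]; [::]; [::]; [::]; [::]; [::]; [::]; [::]; [::]; [::]; [::]; [::]; [::]; [::]; [::]; [::]; [::]; [::]; [::]; [::]; [::]; [::]; [::]; [::]; [::]; [::]; [::]; [::]; [::]; [::]; [::]; [::]; [::]; [::]; [::]; [::]; [::]; [::]; [::]; [::]; [::]; [::]; [::]; [::]; [::]; [::]; [::]; [::]; [::]; [::]; [::]; [::]; [::]; [::]; [::]; [::]; [::]; [::]; [::]];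
[:: [::49]; [::]; [::]; [::]; [::]; [::]; [::]; [::]; [::]; [::]; [::]; [::]; [::]; [::]; [::]; [::]; [::]; [::]; [::]; [::]; [::]; [::]; [::]; [::]; [::]; [::]; [::]; [::]; [::]; [::]; [::]; [::]; [::]; [::]; [::]; [::]; [::]; [::]; [::]; [::]; [::]; [::]; [::]; [::]; [::]; [::]; [::]; [::]; [::]; [::]; [::]; [::]; [::]; [::]; [::]; [::]; [::]; [::]; [::]; [::]; [::]; [::]; [::]; [::]];
[:: [::53]; [::]; [::]; [::]; [::]; [::]; [::]; [::]; [::]; [::]; [::]; [::]; [::]; [::]; [::]; [::]; [::]; [::]; [::]; [::]; [::]; [::]; [::]; [::]; [::]; [::]; [::]; [::]; [::]; [::]; [::]; [::]; [::]; [::]; [::]; [::]; [::]; [::]; [::]; [::]; [::]; [::]; [::]; [::]; [::]; [::]; [::]; [::]; [::]; [::]; [::]; [::]; [::]; [::]; [::]; [::]; [::]; [::]; [::]; [::]; [::]; [::]; [::]; [::]];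
[:: [::54]; [::]; [::]; [::]; [::]; [::]; [::]; [::]; [::]; [::]; [::]; [::]; [::]; [::]; [::]; [::]; [::]; [::]; [::]; [::]; [::]; [::]; [::]; [::]; [::]; [::]; [::]; [::]; [::]; [::]; [::]; [::]; [::]; [::]; [::]; [::]; [::]; [::]; [::]; [::]; [::]; [::]; [::]; [::]; [::]; [::]; [::]; [::]; [::]; [::]; [::]; [::]; [::]; [::]; [::]; [::]; [::]; [::]; [::]; [::]; [::]; [::]; [::]; [::]];
[:: [::56]; [::]; [::]; [::]; [::]; [::]; [::]; [::]; [::]; [::]; [::]; [::]; [::]; [::]; [::]; [::]; [::]; [::]; [::]; [::]; [::]; [::]; [::]; [::]; [::]; [::]; [::]; [::]; [::]; [::]; [::]; [::]; [::]; [::]; [::]; [::]; [::]; [::]; [::]; [::]; [::]; [::]; [::]; [::]; [::]; [::]; [::]; [::]; [::]; [::]; [::]; [::]; [::]; [::]; [::]; [::]; [::]; [::]; [::]; [::]; [::]; [::]; [::]; [::]];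
[:: [::57]; [::]; [::]; [::]; [::]; [::]; [::]; [::]; [::]; [::]; [::]; [::]; [::]; [::]; [::]; [::]; [::]; [::]; [::]; [::]; [::]; [::]; [::]; [::]; [::]; [::]; [::]; [::]; [::]; [::]; [::]; [::]; [::]; [::]; [::]; [::]; [::]; [::]; [::]; [::]; [::]; [::]; [::]; [::]; [::]; [::]; [::]; [::]; [::]; [::]; [::]; [::]; [::]; [::]; [::]; [::]; [::]; [::]; [::]; [::]; [::]; [::]; [::]; [::]];
[:: [::58]; [::]; [::]; [::]; [::]; [::]; [::]; [::]; [::]; [::]; [::]; [::]; [::]; [::]; [::]; [::]; [::]; [::]; [::]; [::]; [::]; [::]; [::]; [::]; [::]; [::]; [::]; [::]; [::]; [::]; [::]; [::]; [::]; [::]; [::]; [::]; [::]; [::]; [::]; [::]; [::]; [::]; [::]; [::]; [::]; [::]; [::]; [::]; [::]; [::]; [::]; [::]; [::]; [::]; [::]; [::]; [::]; [::]; [::]; [::]; [::]; [::]; [::]; [::]];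
[:: [::60]; [::]; [::]; [::]; [::]; [::]; [::]; [::]; [::]; [::]; [::]; [::]; [::]; [::]; [::]; [::]; [::]; [::]; [::]; [::]; [::]; [::]; [::]; [::]; [::]; [::]; [::]; [::]; [::]; [::]; [::]; [::]; [::]; [::]; [::]; [::]; [::]; [::]; [::]; [::]; [::]; [::]; [::]; [::]; [::]; [::]; [::]; [::]; [::]; [::]; [::]; [::]; [::]; [::]; [::]; [::]; [::]; [::]; [::]; [::]; [::]; [::]; [::]; [::]];
[:: [::61]; [::]; [::]; [::]; [::]; [::]; [::]; [::]; [::]; [::]; [::]; [::]; [::]; [::]; [::]; [::]; [::]; [::]; [::]; [::]; [::]; [::]; [::]; [::]; [::]; [::]; [::]; [::]; [::]; [::]; [::]; [::]; [::]; [::]; [::]; [::]; [::]; [::]; [::]; [::]; [::]; [::]; [::]; [::]; [::]; [::]; [::]; [::]; [::]; [::]; [::]; [::]; [::]; [::]; [::]; [::]; [::]; [::]; [::]; [::]; [::]; [::]; [::]; [::]];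
[:: [::62]; [::]; [::]; [::]; [::]; [::]; [::]; [::]; [::]; [::]; [::]; [::]; [::]; [::]; [::]; [::]; [::]; [::]; [::]; [::]; [::]; [::]; [::]; [::]; [::]; [::]; [::]; [::]; [::]; [::]; [::]; [::]; [::]; [::]; [::]; [::]; [::]; [::]; [::]; [::]; [::]; [::]; [::]; [::]; [::]; [::]; [::]; [::]; [::]; [::]; [::]; [::]; [::]; [::]; [::]; [::]; [::]; [::]; [::]; [::]; [::]; [::]; [::]; [::]];
[:: [::63]; [::]; [::]; [::]; [::]; [::]; [::]; [::]; [::]; [::]; [::]; [::]; [::]; [::]; [::]; [::]; [::]; [::]; [::]; [::]; [::]; [::]; [::]; [::]; [::]; [::]; [::]; [::]; [::]; [::]; [::]; [::]; [::]; [::]; [::]; [::]; [::]; [::]; [::]; [::]; [::]; [::]; [::]; [::]; [::]; [::]; [::]; [::]; [::]; [::]; [::]; [::]; [::]; [::]; [::]; [::]; [::]; [::]; [::]; [::]; [::]; [::]; [::]; [::]];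
[:: [::]; [::]; [::]; [::]; [::]; [::]; [::]; [::]; [::]; [::]; [::]; [::]; [::]; [::]; [::]; [::]; [::]; [::]; [::]; [::]; [::]; [::]; [::]; [::]; [::]; [::]; [::]; [::]; [::]; [::]; [::]; [::]; [::]; [::]; [::]; [::]; [::]; [::]; [::]; [::]; [::]; [::]; [::]; [::]; [::]; [::]; [::]; [::]; [::]; [::]; [::]; [::]; [::]; [::]; [::]; [::]; [::]; [::]; [::]; [::]; [::]; [::]; [::]; [::]];
[:: [::]; [::]; [::]; [::]; [::]; [::]; [::]; [::]; [::]; [::]; [::]; [::]; [::]; [::]; [::]; [::]; [::]; [::]; [::]; [::]; [::]; [::]; [::]; [::]; [::]; [::]; [::]; [::]; [::]; [::]; [::]; [::]; [::]; [::]; [::]; [::]; [::]; [::]; [::]; [::]; [::]; [::]; [::]; [::]; [::]; [::]; [::]; [::]; [::]; [::]; [::]; [::]; [::]; [::]; [::]; [::]; [::]; [::]; [::]; [::]; [::]; [::]; [::]; [::]];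
[:: [::]; [::]; [::]; [::]; [::]; [::]; [::]; [::]; [::]; [::]; [::]; [::]; [::]; [::]; [::]; [::]; [::]; [::]; [::]; [::]; [::]; [::]; [::]; [::]; [::]; [::]; [::]; [::]; [::]; [::]; [::]; [::]; [::]; [::]; [::]; [::]; [::]; [::]; [::]; [::]; [::]; [::]; [::]; [::]; [::]; [::]; [::]; [::]; [::]; [::]; [::]; [::]; [::]; [::]; [::]; [::]; [::]; [::]; [::]; [::]; [::]; [::]; [::]; [::]];
[:: [::]; [::]; [::]; [::]; [::]; [::]; [::]; [::]; [::]; [::]; [::]; [::]; [::]; [::]; [::]; [::]; [::]; [::]; [::]; [::]; [::]; [::]; [::]; [::]; [::]; [::]; [::]; [::]; [::]; [::]; [::]; [::]; [::]; [::]; [::]; [::]; [::]; [::]; [::]; [::]; [::]; [::]; [::]; [::]; [::]; [::]; [::]; [::]; [::]; [::]; [::]; [::]; [::]; [::]; [::]; [::]; [::]; [::]; [::]; [::]; [::]; [::]; [::]; [::]];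
[:: [::]; [::]; [::]; [::]; [::]; [::]; [::]; [::]; [::]; [::]; [::]; [::]; [::]; [::]; [::]; [::]; [::]; [::]; [::]; [::]; [::]; [::]; [::]; [::]; [::]; [::]; [::]; [::]; [::]; [::]; [::]; [::]; [::]; [::]; [::]; [::]; [::]; [::]; [::]; [::]; [::]; [::]; [::]; [::]; [::]; [::]; [::]; [::]; [::]; [::]; [::]; [::]; [::]; [::]; [::]; [::]; [::]; [::]; [::]; [::]; [::]; [::]; [::]; [::]];
[:: [::]; [::]; [::]; [::]; [::]; [::]; [::]; [::]; [::]; [::]; [::]; [::]; [::]; [::]; [::]; [::]; [::]; [::]; [::]; [::]; [::]; [::]; [::]; [::]; [::]; [::]; [::]; [::]; [::]; [::]; [::]; [::]; [::]; [::]; [::]; [::]; [::]; [::]; [::]; [::]; [::]; [::]; [::]; [::]; [::]; [::]; [::]; [::]; [::]; [::]; [::]; [::]; [::]; [::]; [::]; [::]; [::]; [::]; [::]; [::]; [::]; [::]; [::]; [::]];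
[:: [::]; [::]; [::]; [::]; [::]; [::]; [::]; [::]; [::]; [::]; [::]; [::]; [::]; [::]; [::]; [::]; [::]; [::]; [::]; [::]; [::]; [::]; [::]; [::]; [::]; [::]; [::]; [::]; [::]; [::]; [::]; [::]; [::]; [::]; [::]; [::]; [::]; [::]; [::]; [::]; [::]; [::]; [::]; [::]; [::]; [::]; [::]; [::]; [::]; [::]; [::]; [::]; [::]; [::]; [::]; [::]; [::]; [::]; [::]; [::]; [::]; [::]; [::]; [::]];
[:: [::]; [::]; [::]; [::]; [::]; [::]; [::]; [::]; [::]; [::]; [::]; [::]; [::]; [::]; [::]; [::]; [::]; [::]; [::]; [::]; [::]; [::]; [::]; [::]; [::]; [::]; [::]; [::]; [::]; [::]; [::]; [::]; [::]; [::]; [::]; [::]; [::]; [::]; [::]; [::]; [::]; [::]; [::]; [::]; [::]; [::]; [::]; [::]; [::]; [::]; [::]; [::]; [::]; [::]; [::]; [::]; [::]; [::]; [::]; [::]; [::]; [::]; [::]; [::]];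
[:: [::]; [::]; [::]; [::]; [::]; [::]; [::]; [::]; [::]; [::]; [::]; [::]; [::]; [::]; [::]; [::]; [::]; [::]; [::]; [::]; [::]; [::]; [::]; [::]; [::]; [::]; [::]; [::]; [::]; [::]; [::]; [::]; [::]; [::]; [::]; [::]; [::]; [::]; [::]; [::]; [::]; [::]; [::]; [::]; [::]; [::]; [::]; [::]; [::]; [::]; [::]; [::]; [::]; [::]; [::]; [::]; [::]; [::]; [::]; [::]; [::]; [::]; [::]; [::]];
[:: [::]; [::]; [::]; [::]; [::]; [::]; [::]; [::]; [::]; [::]; [::]; [::]; [::]; [::]; [::]; [::]; [::]; [::]; [::]; [::]; [::]; [::]; [::]; [::]; [::]; [::]; [::]; [::]; [::]; [::]; [::]; [::]; [::]; [::]; [::]; [::]; [::]; [::]; [::]; [::]; [::]; [::]; [::]; [::]; [::]; [::]; [::]; [::]; [::]; [::]; [::]; [::]; [::]; [::]; [::]; [::]; [::]; [::]; [::]; [::]; [::]; [::]; [::]; [::]];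
[:: [::]; [::]; [::]; [::]; [::]; [::]; [::]; [::]; [::]; [::]; [::]; [::]; [::]; [::]; [::]; [::]; [::]; [::]; [::]; [::]; [::]; [::]; [::]; [::]; [::]; [::]; [::]; [::]; [::]; [::]; [::]; [::]; [::]; [::]; [::]; [::]; [::]; [::]; [::]; [::]; [::]; [::]; [::]; [::]; [::]; [::]; [::]; [::]; [::]; [::]; [::]; [::]; [::]; [::]; [::]; [::]; [::]; [::]; [::]; [::]; [::]; [::]; [::]; [::]];
[:: [::]; [::]; [::]; [::]; [::]; [::]; [::]; [::]; [::]; [::]; [::]; [::]; [::]; [::]; [::]; [::]; [::]; [::]; [::]; [::]; [::]; [::]; [::]; [::]; [::]; [::]; [::]; [::]; [::]; [::]; [::]; [::]; [::]; [::]; [::]; [::]; [::]; [::]; [::]; [::]; [::]; [::]; [::]; [::]; [::]; [::]; [::]; [::]; [::]; [::]; [::]; [::]; [::]; [::]; [::]; [::]; [::]; [::]; [::]; [::]; [::]; [::]; [::]; [::]];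
[:: [::]; [::]; [::]; [::]; [::]; [::]; [::]; [::]; [::]; [::]; [::]; [::]; [::]; [::]; [::]; [::]; [::]; [::]; [::]; [::]; [::]; [::]; [::]; [::]; [::]; [::]; [::]; [::]; [::]; [::]; [::]; [::]; [::]; [::]; [::]; [::]; [::]; [::]; [::]; [::]; [::]; [::]; [::]; [::]; [::]; [::]; [::]; [::]; [::]; [::]; [::]; [::]; [::]; [::]; [::]; [::]; [::]; [::]; [::]; [::]; [::]; [::]; [::]; [::]];
[:: [::]; [::]; [::]; [::]; [::]; [::]; [::]; [::]; [::]; [::]; [::]; [::]; [::]; [::]; [::]; [::]; [::]; [::]; [::]; [::]; [::]; [::]; [::]; [::]; [::]; [::]; [::]; [::]; [::]; [::]; [::]; [::]; [::]; [::]; [::]; [::]; [::]; [::]; [::]; [::]; [::]; [::]; [::]; [::]; [::]; [::]; [::]; [::]; [::]; [::]; [::]; [::]; [::]; [::]; [::]; [::]; [::]; [::]; [::]; [::]; [::]; [::]; [::]; [::]];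
[:: [::]; [::]; [::]; [::]; [::]; [::]; [::]; [::]; [::]; [::]; [::]; [::]; [::]; [::]; [::]; [::]; [::]; [::]; [::]; [::]; [::]; [::]; [::]; [::]; [::]; [::]; [::]; [::]; [::]; [::]; [::]; [::]; [::]; [::]; [::]; [::]; [::]; [::]; [::]; [::]; [::]; [::]; [::]; [::]; [::]; [::]; [::]; [::]; [::]; [::]; [::]; [::]; [::]; [::]; [::]; [::]; [::]; [::]; [::]; [::]; [::]; [::]; [::]; [::]];
[:: [::]; [::]; [::]; [::]; [::]; [::]; [::]; [::]; [::]; [::]; [::]; [::]; [::]; [::]; [::]; [::]; [::]; [::]; [::]; [::]; [::]; [::]; [::]; [::]; [::]; [::]; [::]; [::]; [::]; [::]; [::]; [::]; [::]; [::]; [::]; [::]; [::]; [::]; [::]; [::]; [::]; [::]; [::]; [::]; [::]; [::]; [::]; [::]; [::]; [::]; [::]; [::]; [::]; [::]; [::]; [::]; [::]; [::]; [::]; [::]; [::]; [::]; [::]; [::]];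
[:: [::]; [::]; [::]; [::]; [::]; [::]; [::]; [::]; [::]; [::]; [::]; [::]; [::]; [::]; [::]; [::]; [::]; [::]; [::]; [::]; [::]; [::]; [::]; [::]; [::]; [::]; [::]; [::]; [::]; [::]; [::]; [::]; [::]; [::]; [::]; [::]; [::]; [::]; [::]; [::]; [::]; [::]; [::]; [::]; [::]; [::]; [::]; [::]; [::]; [::]; [::]; [::]; [::]; [::]; [::]; [::]; [::]; [::]; [::]; [::]; [::]; [::]; [::]; [::]];
[:: [::]; [::]; [::]; [::]; [::]; [::]; [::]; [::]; [::]; [::]; [::]; [::]; [::]; [::]; [::]; [::]; [::]; [::]; [::]; [::]; [::]; [::]; [::]; [::]; [::]; [::]; [::]; [::]; [::]; [::]; [::]; [::]; [::]; [::]; [::]; [::]; [::]; [::]; [::]; [::]; [::]; [::]; [::]; [::]; [::]; [::]; [::]; [::]; [::]; [::]; [::]; [::]; [::]; [::]; [::]; [::]; [::]; [::]; [::]; [::]; [::]; [::]; [::]; [::]];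
[:: [::]; [::]; [::]; [::]; [::]; [::]; [::]; [::]; [::]; [::]; [::]; [::]; [::]; [::]; [::]; [::]; [::]; [::]; [::]; [::]; [::]; [::]; [::]; [::]; [::]; [::]; [::]; [::]; [::]; [::]; [::]; [::]; [::]; [::]; [::]; [::]; [::]; [::]; [::]; [::]; [::]; [::]; [::]; [::]; [::]; [::]; [::]; [::]; [::]; [::]; [::]; [::]; [::]; [::]; [::]; [::]; [::]; [::]; [::]; [::]; [::]; [::]; [::]; [::]];
[:: [::]; [::]; [::]; [::]; [::]; [::]; [::]; [::]; [::]; [::]; [::]; [::]; [::]; [::]; [::]; [::]; [::]; [::]; [::]; [::]; [::]; [::]; [::]; [::]; [::]; [::]; [::]; [::]; [::]; [::]; [::]; [::]; [::]; [::]; [::]; [::]; [::]; [::]; [::]; [::]; [::]; [::]; [::]; [::]; [::]; [::]; [::]; [::]; [::]; [::]; [::]; [::]; [::]; [::]; [::]; [::]; [::]; [::]; [::]; [::]; [::]; [::]; [::]; [::]];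
[:: [::]; [::]; [::]; [::]; [::]; [::]; [::]; [::]; [::]; [::]; [::]; [::]; [::]; [::]; [::]; [::]; [::]; [::]; [::]; [::]; [::]; [::]; [::]; [::]; [::]; [::]; [::]; [::]; [::]; [::]; [::]; [::]; [::]; [::]; [::]; [::]; [::]; [::]; [::]; [::]; [::]; [::]; [::]; [::]; [::]; [::]; [::]; [::]; [::]; [::]; [::]; [::]; [::]; [::]; [::]; [::]; [::]; [::]; [::]; [::]; [::]; [::]; [::]; [::]];
[:: [::]; [::]; [::]; [::]; [::]; [::]; [::]; [::]; [::]; [::]; [::]; [::]; [::]; [::]; [::]; [::]; [::]; [::]; [::]; [::]; [::]; [::]; [::]; [::]; [::]; [::]; [::]; [::]; [::]; [::]; [::]; [::]; [::]; [::]; [::]; [::]; [::]; [::]; [::]; [::]; [::]; [::]; [::]; [::]; [::]; [::]; [::]; [::]; [::]; [::]; [::]; [::]; [::]; [::]; [::]; [::]; [::]; [::]; [::]; [::]; [::]; [::]; [::]; [::]];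
[:: [::]; [::]; [::]; [::]; [::]; [::]; [::]; [::]; [::]; [::]; [::]; [::]; [::]; [::]; [::]; [::]; [::]; [::]; [::]; [::]; [::]; [::]; [::]; [::]; [::]; [::]; [::]; [::]; [::]; [::]; [::]; [::]; [::]; [::]; [::]; [::]; [::]; [::]; [::]; [::]; [::]; [::]; [::]; [::]; [::]; [::]; [::]; [::]; [::]; [::]; [::]; [::]; [::]; [::]; [::]; [::]; [::]; [::]; [::]; [::]; [::]; [::]; [::]; [::]];
[:: [::]; [::]; [::]; [::]; [::]; [::]; [::]; [::]; [::]; [::]; [::]; [::]; [::]; [::]; [::]; [::]; [::]; [::]; [::]; [::]; [::]; [::]; [::]; [::]; [::]; [::]; [::]; [::]; [::]; [::]; [::]; [::]; [::]; [::]; [::]; [::]; [::]; [::]; [::]; [::]; [::]; [::]; [::]; [::]; [::]; [::]; [::]; [::]; [::]; [::]; [::]; [::]; [::]; [::]; [::]; [::]; [::]; [::]; [::]; [::]; [::]; [::]; [::]; [::]];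
[:: [::]; [::]; [::]; [::]; [::]; [::]; [::]; [::]; [::]; [::]; [::]; [::]; [::]; [::]; [::]; [::]; [::]; [::]; [::]; [::]; [::]; [::]; [::]; [::]; [::]; [::]; [::]; [::]; [::]; [::]; [::]; [::]; [::]; [::]; [::]; [::]; [::]; [::]; [::]; [::]; [::]; [::]; [::]; [::]; [::]; [::]; [::]; [::]; [::]; [::]; [::]; [::]; [::]; [::]; [::]; [::]; [::]; [::]; [::]; [::]; [::]; [::]; [::]; [::]];
[:: [::]; [::]; [::]; [::]; [::]; [::]; [::]; [::]; [::]; [::]; [::]; [::]; [::]; [::]; [::]; [::]; [::]; [::]; [::]; [::]; [::]; [::]; [::]; [::]; [::]; [::]; [::]; [::]; [::]; [::]; [::]; [::]; [::]; [::]; [::]; [::]; [::]; [::]; [::]; [::]; [::]; [::]; [::]; [::]; [::]; [::]; [::]; [::]; [::]; [::]; [::]; [::]; [::]; [::]; [::]; [::]; [::]; [::]; [::]; [::]; [::]; [::]; [::]; [::]];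
[:: [::]; [::]; [::]; [::]; [::]; [::]; [::]; [::]; [::]; [::]; [::]; [::]; [::]; [::]; [::]; [::]; [::]; [::]; [::]; [::]; [::]; [::]; [::]; [::]; [::]; [::]; [::]; [::]; [::]; [::]; [::]; [::]; [::]; [::]; [::]; [::]; [::]; [::]; [::]; [::]; [::]; [::]; [::]; [::]; [::]; [::]; [::]; [::]; [::]; [::]; [::]; [::]; [::]; [::]; [::]; [::]; [::]; [::]; [::]; [::]; [::]; [::]; [::]; [::]];
[:: [::]; [::]; [::]; [::]; [::]; [::]; [::]; [::]; [::]; [::]; [::]; [::]; [::]; [::]; [::]; [::]; [::]; [::]; [::]; [::]; [::]; [::]; [::]; [::]; [::]; [::]; [::]; [::]; [::]; [::]; [::]; [::]; [::]; [::]; [::]; [::]; [::]; [::]; [::]; [::]; [::]; [::]; [::]; [::]; [::]; [::]; [::]; [::]; [::]; [::]; [::]; [::]; [::]; [::]; [::]; [::]; [::]; [::]; [::]; [::]; [::]; [::]; [::]; [::]];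
[:: [::]; [::]; [::]; [::]; [::]; [::]; [::]; [::]; [::]; [::]; [::]; [::]; [::]; [::]; [::]; [::]; [::]; [::]; [::]; [::]; [::]; [::]; [::]; [::]; [::]; [::]; [::]; [::]; [::]; [::]; [::]; [::]; [::]; [::]; [::]; [::]; [::]; [::]; [::]; [::]; [::]; [::]; [::]; [::]; [::]; [::]; [::]; [::]; [::]; [::]; [::]; [::]; [::]; [::]; [::]; [::]; [::]; [::]; [::]; [::]; [::]; [::]; [::]; [::]];
[:: [::]; [::]; [::]; [::]; [::]; [::]; [::]; [::]; [::]; [::]; [::]; [::]; [::]; [::]; [::]; [::]; [::]; [::]; [::]; [::]; [::]; [::]; [::]; [::]; [::]; [::]; [::]; [::]; [::]; [::]; [::]; [::]; [::]; [::]; [::]; [::]; [::]; [::]; [::]; [::]; [::]; [::]; [::]; [::]; [::]; [::]; [::]; [::]; [::]; [::]; [::]; [::]; [::]; [::]; [::]; [::]; [::]; [::]; [::]; [::]; [::]; [::]; [::]; [::]];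
[:: [::]; [::]; [::]; [::]; [::]; [::]; [::]; [::]; [::]; [::]; [::]; [::]; [::]; [::]; [::]; [::]; [::]; [::]; [::]; [::]; [::]; [::]; [::]; [::]; [::]; [::]; [::]; [::]; [::]; [::]; [::]; [::]; [::]; [::]; [::]; [::]; [::]; [::]; [::]; [::]; [::]; [::]; [::]; [::]; [::]; [::]; [::]; [::]; [::]; [::]; [::]; [::]; [::]; [::]; [::]; [::]; [::]; [::]; [::]; [::]; [::]; [::]; [::]; [::]];
[:: [::]; [::]; [::]; [::]; [::]; [::]; [::]; [::]; [::]; [::]; [::]; [::]; [::]; [::]; [::]; [::]; [::]; [::]; [::]; [::]; [::]; [::]; [::]; [::]; [::]; [::]; [::]; [::]; [::]; [::]; [::]; [::]; [::]; [::]; [::]; [::]; [::]; [::]; [::]; [::]; [::]; [::]; [::]; [::]; [::]; [::]; [::]; [::]; [::]; [::]; [::]; [::]; [::]; [::]; [::]; [::]; [::]; [::]; [::]; [::]; [::]; [::]; [::]; [::]];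
[:: [::]; [::]; [::]; [::]; [::]; [::]; [::]; [::]; [::]; [::]; [::]; [::]; [::]; [::]; [::]; [::]; [::]; [::]; [::]; [::]; [::]; [::]; [::]; [::]; [::]; [::]; [::]; [::]; [::]; [::]; [::]; [::]; [::]; [::]; [::]; [::]; [::]; [::]; [::]; [::]; [::]; [::]; [::]; [::]; [::]; [::]; [::]; [::]; [::]; [::]; [::]; [::]; [::]; [::]; [::]; [::]; [::]; [::]; [::]; [::]; [::]; [::]; [::]; [::]];
[:: [::]; [::]; [::]; [::]; [::]; [::]; [::]; [::]; [::]; [::]; [::]; [::]; [::]; [::]; [::]; [::]; [::]; [::]; [::]; [::]; [::]; [::]; [::]; [::]; [::]; [::]; [::]; [::]; [::]; [::]; [::]; [::]; [::]; [::]; [::]; [::]; [::]; [::]; [::]; [::]; [::]; [::]; [::]; [::]; [::]; [::]; [::]; [::]; [::]; [::]; [::]; [::]; [::]; [::]; [::]; [::]; [::]; [::]; [::]; [::]; [::]; [::]; [::]; [::]];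
[:: [::]; [::]; [::]; [::]; [::]; [::]; [::]; [::]; [::]; [::]; [::]; [::]; [::]; [::]; [::]; [::]; [::]; [::]; [::]; [::]; [::]; [::]; [::]; [::]; [::]; [::]; [::]; [::]; [::]; [::]; [::]; [::]; [::]; [::]; [::]; [::]; [::]; [::]; [::]; [::]; [::]; [::]; [::]; [::]; [::]; [::]; [::]; [::]; [::]; [::]; [::]; [::]; [::]; [::]; [::]; [::]; [::]; [::]; [::]; [::]; [::]; [::]; [::]; [::]];
[:: [::]; [::]; [::]; [::]; [::]; [::]; [::]; [::]; [::]; [::]; [::]; [::]; [::]; [::]; [::]; [::]; [::]; [::]; [::]; [::]; [::]; [::]; [::]; [::]; [::]; [::]; [::]; [::]; [::]; [::]; [::]; [::]; [::]; [::]; [::]; [::]; [::]; [::]; [::]; [::]; [::]; [::]; [::]; [::]; [::]; [::]; [::]; [::]; [::]; [::]; [::]; [::]; [::]; [::]; [::]; [::]; [::]; [::]; [::]; [::]; [::]; [::]; [::]; [::]];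
[:: [::]; [::]; [::]; [::]; [::]; [::]; [::]; [::]; [::]; [::]; [::]; [::]; [::]; [::]; [::]; [::]; [::]; [::]; [::]; [::]; [::]; [::]; [::]; [::]; [::]; [::]; [::]; [::]; [::]; [::]; [::]; [::]; [::]; [::]; [::]; [::]; [::]; [::]; [::]; [::]; [::]; [::]; [::]; [::]; [::]; [::]; [::]; [::]; [::]; [::]; [::]; [::]; [::]; [::]; [::]; [::]; [::]; [::]; [::]; [::]; [::]; [::]; [::]; [::]];
[:: [::]; [::]; [::]; [::]; [::]; [::]; [::]; [::]; [::]; [::]; [::]; [::]; [::]; [::]; [::]; [::]; [::]; [::]; [::]; [::]; [::]; [::]; [::]; [::]; [::]; [::]; [::]; [::]; [::]; [::]; [::]; [::]; [::]; [::]; [::]; [::]; [::]; [::]; [::]; [::]; [::]; [::]; [::]; [::]; [::]; [::]; [::]; [::]; [::]; [::]; [::]; [::]; [::]; [::]; [::]; [::]; [::]; [::]; [::]; [::]; [::]; [::]; [::]; [::]];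
[:: [::]; [::]; [::]; [::]; [::]; [::]; [::]; [::]; [::]; [::]; [::]; [::]; [::]; [::]; [::]; [::]; [::]; [::]; [::]; [::]; [::]; [::]; [::]; [::]; [::]; [::]; [::]; [::]; [::]; [::]; [::]; [::]; [::]; [::]; [::]; [::]; [::]; [::]; [::]; [::]; [::]; [::]; [::]; [::]; [::]; [::]; [::]; [::]; [::]; [::]; [::]; [::]; [::]; [::]; [::]; [::]; [::]; [::]; [::]; [::]; [::]; [::]; [::]; [::]];
[:: [::]; [::]; [::]; [::]; [::]; [::]; [::]; [::]; [::]; [::]; [::]; [::]; [::]; [::]; [::]; [::]; [::]; [::]; [::]; [::]; [::]; [::]; [::]; [::]; [::]; [::]; [::]; [::]; [::]; [::]; [::]; [::]; [::]; [::]; [::]; [::]; [::]; [::]; [::]; [::]; [::]; [::]; [::]; [::]; [::]; [::]; [::]; [::]; [::]; [::]; [::]; [::]; [::]; [::]; [::]; [::]; [::]; [::]; [::]; [::]; [::]; [::]; [::]; [::]];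
[:: [::]; [::]; [::]; [::]; [::]; [::]; [::]; [::]; [::]; [::]; [::]; [::]; [::]; [::]; [::]; [::]; [::]; [::]; [::]; [::]; [::]; [::]; [::]; [::]; [::]; [::]; [::]; [::]; [::]; [::]; [::]; [::]; [::]; [::]; [::]; [::]; [::]; [::]; [::]; [::]; [::]; [::]; [::]; [::]; [::]; [::]; [::]; [::]; [::]; [::]; [::]; [::]; [::]; [::]; [::]; [::]; [::]; [::]; [::]; [::]; [::]; [::]; [::]; [::]];
[:: [::]; [::]; [::]; [::]; [::]; [::]; [::]; [::]; [::]; [::]; [::]; [::]; [::]; [::]; [::]; [::]; [::]; [::]; [::]; [::]; [::]; [::]; [::]; [::]; [::]; [::]; [::]; [::]; [::]; [::]; [::]; [::]; [::]; [::]; [::]; [::]; [::]; [::]; [::]; [::]; [::]; [::]; [::]; [::]; [::]; [::]; [::]; [::]; [::]; [::]; [::]; [::]; [::]; [::]; [::]; [::]; [::]; [::]; [::]; [::]; [::]; [::]; [::]; [::]]].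
Definition Ysp : seq (nat * nat * bool) := [:: (25, 0, false); (25, 1, false); (25, 2, false); (25, 3, false); (25, 30, true); (27, 11, true); (27, 14, false); (27, 29, false); (28, 4, true); (28, 7, false); (28, 27, false); (28, 28, true); (29, 4, false); (38, 15, false); (38, 16, true); (38, 21, false); (39, 12, true); (39, 19, false); (39, 22, true); (39, 31, false); (40, 9, false); (42, 17, false); (43, 23, false); (44, 6, false); (48, 13, false); (49, 25, false); (51, 14, false); (53, 14, false); (53, 29, false); (54, 14, true); (54, 18, false); (56, 19, false); (58, 12, false); (59, 19, true); (59, 20, false); (60, 8, false); (61, 15, false); (62, 15, true); (62, 16, false); (63, 12, true); (63, 15, false); (63, 16, true); (63, 19, false); (63, 21, false); (63, 31, false); (64, 5, false); (65, 7, false); (66, 0, false); (67, 2, false); (68, 17, false); (68, 24, false); (69, 10, false); (70, 27, false); (71, 1, false); (72, 3, false); (73, 13, false); (73, 23, false); (73, 32, false); (74, 26, false)].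
Definition Zsp : seq (nat * nat * bool) := [:: (22, 6, true); (22, 34, false); (22, 55, false); (23, 57, true); (24, 55, true); (25, 6, false); (25, 31, true); (25, 34, true); (25, 55, true); (25, 57, false); (26, 32, true); (26, 55, false); (27, 7, true); (27, 33, false); (28, 7, false); (28, 30, true); (28, 33, true); (29, 34, true); (30, 36, true); (31, 37, true); (32, 33, true); (33, 35, true); (34, 6, true); (34, 11, true); (34, 31, false); (34, 32, false); (34, 34, false); (34, 36, false); (34, 37, false); (35, 7, true); (35, 12, true); (35, 30, false); (35, 33, false); (35, 35, false); (36, 5, true); (36, 50, false); (37, 52, true); (38, 50, true); (39, 5, false); (39, 26, true); (39, 50, true); (39, 52, false); (40, 5, true); (40, 10, true); (40, 26, false); (40, 50, false); (41, 9, true); (42, 14, true); (43, 1, true); (44, 46, true); (45, 47, true); (46, 2, true); (47, 45, true); (48, 21, true); (48, 46, false); (48, 47, false); (49, 22, true); (49, 45, false); (50, 8, true); (51, 13, true); (52, 0, true); (53, 41, true); (54, 20, true); (54, 41, false); (55, 4, true); (56, 24, true); (57, 16, true); (58, 17, true); (59, 3, true); (60, 23, true); (61, 15, true); (62, 19, true); (63, 18, true)].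
Definition Wsp : seq (nat * nat * bool) := [:: (25, 0, false); (25, 1, false); (25, 2, false); (25, 3, false); (25, 30, true); (27, 11, true); (27, 14, false); (27, 29, false); (28, 4, true); (28, 7, false); (28, 27, false); (28, 28, true); (29, 4, false); (38, 15, false); (38, 16, true); (38, 21, false); (39, 12, true); (39, 19, false); (39, 22, true); (39, 31, false); (40, 9, false); (42, 17, false); (43, 23, false); (44, 6, false); (48, 13, false); (49, 25, false); (51, 14, false); (53, 14, false); (53, 29, false); (54, 14, true); (54, 18, false); (56, 19, false); (58, 12, false); (59, 19, true); (59, 20, false); (60, 8, false); (61, 15, false); (62, 15, true); (62, 16, false); (63, 12, true); (63, 15, false); (63, 16, true); (63, 19, false); (63, 21, false); (63, 31, false); (64, 5, false); (65, 7, false); (66, 0, false); (67, 2, false); (68, 17, false); (68, 24, false); (69, 10, false); (70, 27, false); (71, 1, false); (72, 3, false); (73, 13, false); (73, 23, false); (73, 32, false); (74, 26, false)].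

Definition Tp (a b : nat) : seq nat := nth [::] (nth [::] Tpl a) b.
Definition Ts (a b : nat) : seq nat := nth [::] (nth [::] Tsl a) b.
Definition mulS (T : nat -> nat -> seq nat) (l1 l2 : seq nat) : seq nat :=
  flatten [seq flatten [seq (if ((a < 64) && (b < 64))%N then T a b else [::]) | b <- l2] | a <- l1].

Definition basis_ok (a b c : nat) : bool :=
  [&& perm_eq (mulS Tp (mulS Ts [::a] [::b]) [::c]) (mulS Ts [::a] (mulS Tp [::b] [::c])),
      perm_eq (mulS Tp (mulS Tp [::a] [::b]) [::c])
              (mulS Tp [::a] (mulS Tp [::b] [::c]) ++ mulS Tp [::a] (mulS Ts [::b] [::c])) &
      perm_eq (mulS Ts [::a] (mulS Ts [::b] [::c]))
              (mulS Ts (mulS Ts [::a] [::b]) [::c] ++ mulS Ts (mulS Tp [::a] [::b]) [::c])].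
Definition dg (i : nat) : nat :=
  if (i < 1)%N then 1%N else if (i < 3)%N then 2%N else if (i < 8)%N then 3%N
  else if (i < 22)%N then 4%N else 5%N.
Definition deg_ok (a b : nat) : bool :=
  all (fun d => (d < 64)%N && (dg d == dg a + dg b)%N) (Tp a b ++ Ts a b).
Definition deg_check : bool := all (fun a => all (fun b => deg_ok a b) (iota 0 64)) (iota 0 64).
Lemma deg_check_ok : deg_check = true.
Proof. vm_compute. reflexivity. Qed.
Definition basis_check : bool :=
  all (fun a => all (fun b => (4 < dg a + dg b)%N ||
     all (fun c => (5 < dg a + dg b + dg c)%N || basis_ok a b c) (iota 0 64)) (iota 0 64)) (iota 0 64).
Lemma basis_check_ok : basis_check = true.
Proof. vm_compute. reflexivity. Qed.

Lemma dg_le5 i : (dg i <= 5)%N.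
Proof. by rewrite /dg; repeat case: ifP. Qed.
Lemma dg_gt0 i : (0 < dg i)%N.
Proof. by rewrite /dg; repeat case: ifP. Qed.

Lemma degP a b d : (a < 64)%N -> (b < 64)%N -> d \in Tp a b ++ Ts a b ->
  (d < 64)%N /\ dg d = (dg a + dg b)%N.
Proof.
move=> ha hb hd.
have := deg_check_ok; rewrite /deg_check => /allP /(_ a); rewrite mem_iota ha => /(_ isT).
move=> /allP /(_ b); rewrite mem_iota hb => /(_ isT) /allP /(_ d hd) /andP [-> /eqP ->].
by [].
Qed.

Lemma T_deg (T : nat -> nat -> seq nat) a b d : (T = Tp \/ T = Ts) ->
  (a < 64)%N -> (b < 64)%N -> d \in T a b -> (d < 64)%N /\ dg d = (dg a + dg b)%N.
Proof.
move=> HT ha hb hd; apply: degP => //; rewrite mem_cat.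
by case: HT hd => -> ->; rewrite ?orbT.
Qed.

Lemma T_nil (T : nat -> nat -> seq nat) a b : (T = Tp \/ T = Ts) ->
  (a < 64)%N -> (b < 64)%N -> (5 < dg a + dg b)%N -> T a b = [::].
Proof.
move=> HT ha hb hs.
have H : forall d, d \in T a b -> False.
  move=> d hd; have [_ E] := T_deg HT ha hb hd.
  by move: (dg_le5 d); rewrite E leqNgt hs.
by case: (T a b) H => // d l /(_ d (mem_head d l)).
Qed.

Lemma mulS1 T a b : (a < 64)%N -> (b < 64)%N -> mulS T [:: a] [:: b] = T a b.
Proof. by move=> ha hb; rewrite /mulS /= ha hb /= !cats0. Qed.

Lemma mulS_l_nil T l c : (forall d, d \in l -> (d < 64)%N -> (c < 64)%N -> T d c = [::]) ->
  mulS T l [:: c] = [::].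
Proof.
elim: l => [|d l IH] H //=.
rewrite /mulS /= -/(mulS T l [:: c]) IH; last by move=> e he; apply: H; rewrite inE he orbT.
case: ifP => // /andP [hd hc]; rewrite H ?mem_head //.
Qed.

Lemma mulS_r_nil T a l : (forall d, d \in l -> (a < 64)%N -> (d < 64)%N -> T a d = [::]) ->
  mulS T [:: a] l = [::].
Proof.
move=> H; rewrite /mulS /= cats0; elim: l H => [|d l IH] H //=.
rewrite IH; last by move=> e he; apply: H; rewrite inE he orbT.
case: ifP => // /andP [ha hd]; rewrite H ?mem_head //.
Qed.

Lemma basis_okP (a b c : 'I_64) : basis_ok a b c.
Proof.
have ha := ltn_ord a; have hb := ltn_ord b; have hc := ltn_ord c.
case: (leqP (dg a + dg b + dg c) 5) => hs.
  have := basis_check_ok; rewrite /basis_check => /allP /(_ a); rewrite mem_iota ha => /(_ isT).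
  move=> /allP /(_ b); rewrite mem_iota hb => /(_ isT).
  have -> : (4 < dg a + dg b)%N = false.
    by apply/negbTE; rewrite -leqNgt; move: hs (dg_gt0 c); lia.
  move=> /allP /(_ c); rewrite mem_iota hc => /(_ isT).
  by rewrite ltnNge hs.
have L1 : forall T T' : nat -> nat -> seq nat, (T = Tp \/ T = Ts) -> (T' = Tp \/ T' = Ts) ->
    mulS T' (mulS T [:: (a : nat)] [:: (b : nat)]) [:: (c : nat)] = [::].
  move=> T T' HT HT'; rewrite mulS1 //; apply: mulS_l_nil => d hd _ _.
  have [hd64 E] := T_deg HT ha hb hd.
  by apply: T_nil => //; rewrite E.
have L2 : forall T T' : nat -> nat -> seq nat, (T = Tp \/ T = Ts) -> (T' = Tp \/ T' = Ts) ->
    mulS T' [:: (a : nat)] (mulS T [:: (b : nat)] [:: (c : nat)]) = [::].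
  move=> T T' HT HT'; rewrite mulS1 //; apply: mulS_r_nil => d hd _ _.
  have [hd64 E] := T_deg HT hb hc hd.
  by apply: T_nil => //; rewrite E addnA.
rewrite /basis_ok !L1 ?L2 //; try (by left); try (by right).
Qed.

Section Model.
Variable F : fieldType.
Local Notation vT := 'rV[F]_64.
Definition vec (l : seq nat) : vT := \row_(i < 64) (count_mem (i : nat) l)%:R.
Definition mk (T : nat -> nat -> seq nat) (u v : vT) : vT :=
  \sum_(a < 64) \sum_(b < 64) (u 0 a * v 0 b) *: vec (T a b).

Lemma mkL T k x y z : mk T (k *: x + y) z = k *: mk T x z + mk T y z.
Proof.
rewrite /mk scaler_sumr -big_split; apply: eq_bigr => a _.
rewrite scaler_sumr -big_split; apply: eq_bigr => b _ /=.
by rewrite !mxE mulrDl scalerDl scalerA -mulrA.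
Qed.
Lemma mkR T k x y z : mk T x (k *: y + z) = k *: mk T x y + mk T x z.
Proof.
rewrite /mk scaler_sumr -big_split; apply: eq_bigr => a _.
rewrite scaler_sumr -big_split; apply: eq_bigr => b _ /=.
by rewrite !mxE mulrDr scalerDl scalerA mulrCA.
Qed.
Lemma mk0l T z : mk T 0 z = 0.
Proof. by rewrite /mk big1 // => a _; rewrite big1 // => b _; rewrite mxE mul0r scale0r. Qed.
Lemma mk0r T z : mk T z 0 = 0.
Proof. by rewrite /mk big1 // => a _; rewrite big1 // => b _; rewrite mxE mulr0 scale0r. Qed.
Lemma mkDl T x y z : mk T (x + y) z = mk T x z + mk T y z.
Proof. by have := mkL T 1 x y z; rewrite !scale1r. Qed.
Lemma mkDr T x y z : mk T z (x + y) = mk T z x + mk T z y.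
Proof. by have := mkR T 1 z x y; rewrite !scale1r. Qed.

Lemma vec_nil : vec [::] = 0.
Proof. by apply/rowP => i; rewrite !mxE. Qed.
Lemma vec_cat l1 l2 : vec (l1 ++ l2) = vec l1 + vec l2.
Proof. by apply/rowP => i; rewrite !mxE count_cat natrD. Qed.
Lemma vec_perm l1 l2 : perm_eq l1 l2 -> vec l1 = vec l2.
Proof. by move=> /permP H; apply/rowP => i; rewrite !mxE H. Qed.
Lemma vec1 (a : 'I_64) : vec [:: (a : nat)] = delta_mx 0 a.
Proof. by apply/rowP => i; rewrite !mxE /= addn0 eq_sym. Qed.
Lemma vec1_big (a : nat) : (64 <= a)%N -> vec [:: a] = 0.
Proof.
move=> h; apply/rowP => i; rewrite !mxE /= addn0.
by case: eqP => // E; move: (ltn_ord i); rewrite -E ltnNge h.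
Qed.
Lemma vec_flat_nil (l : seq nat) : vec (flatten [seq [::] | _ <- l]) = 0.
Proof. by elim: l => [|a l IH] /=; rewrite ?vec_nil. Qed.

Lemma mk_delta T (a b : 'I_64) : mk T (delta_mx 0 a) (delta_mx 0 b) = vec (T a b).
Proof.
rewrite /mk (bigD1 a) //= [X in _ + X]big1 ?addr0 => [|a' na]; last first.
  by apply: big1 => b' _; rewrite !mxE eqxx /= (negbTE na) mul0r scale0r.
rewrite (bigD1 b) //= [X in _ + X]big1 ?addr0 => [|b' nb]; last first.
  by rewrite !mxE eqxx /= (negbTE nb) mulr0 scale0r.
by rewrite !mxE !eqxx /= mulr1 scale1r.
Qed.

Lemma mk_vec T l1 l2 : mk T (vec l1) (vec l2) = vec (mulS T l1 l2).
Proof.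
elim: l1 => [|a l1 IH].
  by rewrite vec_nil mk0l.
rewrite /mulS /= vec_cat -/(mulS T l1 l2) -IH -[a :: l1]/([:: a] ++ l1) vec_cat mkDl.
congr (_ + _).
case: (ltnP a 64) => ha; last first.
  by rewrite vec1_big // mk0l; symmetry; apply: vec_flat_nil.
have -> : (a = Ordinal ha) by [].
rewrite vec1; clear IH; elim: l2 => [|b l2 IH2]; first by rewrite vec_nil mk0r.
rewrite /= vec_cat -IH2 -[b :: l2]/([:: b] ++ l2) vec_cat mkDr; congr (_ + _).
case: (ltnP b 64) => hb; last by rewrite vec1_big // mk0r /= vec_nil.
have -> : (b = Ordinal hb) by [].
by rewrite vec1 mk_delta.
Qed.
End Model.

Section Model2.
Variable F : fieldType.
Local Notation vT := 'rV[F]_64.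
Definition prM : vT -> vT -> vT := mk Tp.
Definition suM : vT -> vT -> vT := mk Ts.

Definition linF (h : vT -> vT) := forall (k : F) u v, h (k *: u + v) = k *: h u + h v.
Lemma lin_expand h u : linF h -> h u = \sum_(j < 64) u 0 j *: h (delta_mx 0 j).
Proof.
move=> H; rewrite {1}(row_sum_delta u).
elim/big_rec2: _ => [|j y1 y2 _ <-].
  by have := H (-1) 0 0; rewrite scaler0 addr0 scaleN1r addNr.
exact: H.
Qed.

Lemma ext3 (f g : vT -> vT -> vT -> vT) :
  (forall y z, linF (fun x => f x y z)) -> (forall x z, linF (fun y => f x y z)) ->
  (forall x y, linF (fun z => f x y z)) ->
  (forall y z, linF (fun x => g x y z)) -> (forall x z, linF (fun y => g x y z)) ->
  (forall x y, linF (fun z => g x y z)) ->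
  (forall a b c : 'I_64, f (delta_mx 0 a) (delta_mx 0 b) (delta_mx 0 c) =
                         g (delta_mx 0 a) (delta_mx 0 b) (delta_mx 0 c)) ->
  forall x y z, f x y z = g x y z.
Proof.
move=> f1 f2 f3 g1 g2 g3 H x y z.
transitivity (\sum_(a < 64) x 0 a *: f (delta_mx 0 a) y z); first exact: (lin_expand x (f1 y z)).
transitivity (\sum_(a < 64) x 0 a *: g (delta_mx 0 a) y z); last by symmetry; exact: (lin_expand x (g1 y z)).
apply: eq_bigr => a _; congr (_ *: _).
transitivity (\sum_(b < 64) y 0 b *: f (delta_mx 0 a) (delta_mx 0 b) z); first exact: (lin_expand y (f2 _ z)).
transitivity (\sum_(b < 64) y 0 b *: g (delta_mx 0 a) (delta_mx 0 b) z); last by symmetry; exact: (lin_expand y (g2 _ z)).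
apply: eq_bigr => b _; congr (_ *: _).
transitivity (\sum_(c < 64) z 0 c *: f (delta_mx 0 a) (delta_mx 0 b) (delta_mx 0 c)); first exact: (lin_expand z (f3 _ _)).
transitivity (\sum_(c < 64) z 0 c *: g (delta_mx 0 a) (delta_mx 0 b) (delta_mx 0 c)); last by symmetry; exact: (lin_expand z (g3 _ _)).
by apply: eq_bigr => c _; rewrite H.
Qed.

Ltac linsolve := move=> k u v; cbv beta; rewrite /prM /suM ?(mkL, mkR) ?scalerDr; try rewrite [LHS]addrACA.

Lemma ax1 x y z : prM (suM x y) z = suM x (prM y z).
Proof.
apply: (ext3 (f := fun x y z => prM (suM x y) z) (g := fun x y z => suM x (prM y z))).
  1-6: by move=> ? ?; linsolve.
move=> a b c; cbv beta; rewrite /prM /suM -!vec1 !mk_vec ; apply: vec_perm.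
by case/and3P: (basis_okP a b c) => H _ _; exact: H.
Qed.
Lemma ax2 x y z : prM (prM x y) z = prM x (prM y z) + prM x (suM y z).
Proof.
apply: (ext3 (f := fun x y z => prM (prM x y) z) (g := fun x y z => prM x (prM y z) + prM x (suM y z))).
  1-6: by move=> ? ?; linsolve.
move=> a b c; cbv beta; rewrite /prM /suM -!vec1 !mk_vec -vec_cat; apply: vec_perm.
by case/and3P: (basis_okP a b c) => _ H _; exact: H.
Qed.
Lemma ax3 x y z : suM x (suM y z) = suM (suM x y) z + suM (prM x y) z.
Proof.
apply: (ext3 (f := fun x y z => suM x (suM y z)) (g := fun x y z => suM (suM x y) z + suM (prM x y) z)).
  1-6: by move=> ? ?; linsolve.
move=> a b c; cbv beta; rewrite /prM /suM -!vec1 !mk_vec -vec_cat; apply: vec_perm.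
by case/and3P: (basis_okP a b c) => _ _ H; exact: H.
Qed.

Lemma model_dend : is_dendriform prM suM.
Proof.
split; first (by move=> k u v w; rewrite /prM mkL); first (by move=> k u v w; rewrite /prM mkR);
  first (by move=> k u v w; rewrite /suM mkL); first (by move=> k u v w; rewrite /suM mkR).
split; [exact: ax1 | exact: ax2 | exact: ax3].
Qed.
End Model2.

Definition g0l : seq nat := [:: 0%N].
Definition domL (i : nat) (x y z : seq nat) : seq nat :=
  match i with
  | 0 => mulS Ts x (mulS Tp y z)
  | 1 => mulS Tp x (mulS Tp y z)
  | 2 => mulS Tp x (mulS Ts y z)
  | 3 => mulS Ts (mulS Ts x y) z
  | _ => mulS Ts (mulS Tp x y) z
  end.
Definition evL (m : nat) : seq nat :=
  let k := (m %/ 25)%N in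
  let j := ((m %% 25) %/ 5)%N in
  let i := (m %% 5)%N in
  match k with
  | 0 => domL j (domL i g0l g0l g0l) g0l g0l
  | 1 => domL j g0l (domL i g0l g0l g0l) g0l
  | _ => domL j g0l g0l (domL i g0l g0l g0l)
  end.
Definition Etab : seq (seq nat) := map evL (iota 0 75).
Definition EI (E : seq (seq nat)) (m i : nat) : int := Posz (count_mem i (nth [::] E m)).
Definition sp (s : seq (nat * nat * bool)) (i j : nat) : int :=
  foldr (fun e acc => if (e.1.1 == i) && (e.1.2 == j) then (if e.2 then 1 else -1) + acc else acc) 0 s.
Definition isum (n : nat) (h : nat -> int) : int := foldr (fun k acc => h k + acc) 0 (iota 0 n).
Definition deltaI (i j : nat) : int := if i == j then 1 else 0.
Definition Rtab : seq (seq int) := [seq [seq RI k j | j <- iota 0 75] | k <- iota 0 33].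
Definition dense (s : seq (nat * nat * bool)) m n : seq (seq int) :=
  [seq [seq sp s i j | j <- iota 0 n] | i <- iota 0 m].
Definition tb (t : seq (seq int)) (i j : nat) : int := nth 0 (nth [::] t i) j.
Definition Ytab := dense Ysp 75 33.
Definition Ztab := dense Zsp 64 75.
Definition Wtab := dense Wsp 75 33.
Definition cert2 (Rt Yt Zt : seq (seq int)) (E : seq (seq nat)) : bool :=
  all (fun i => all (fun j =>
    isum 33 (fun k => tb Yt i k * tb Rt k j) + isum 64 (fun k => EI E i k * tb Zt k j) == deltaI i j)
    (iota 0 75)) (iota 0 75).
Lemma cert_ok : cert2 Rtab Ytab Ztab Etab = true.
Proof. vm_compute. reflexivity. Qed.
Definition W2 (Rt Wt : seq (seq int)) : bool :=
  all (fun i => all (fun j => isum 75 (fun k => tb Rt i k * tb Wt k j) == deltaI i j)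
    (iota 0 33)) (iota 0 33).
Lemma W_ok : W2 Rtab Wtab = true.
Proof. vm_compute. reflexivity. Qed.

Lemma RtabE (k j : nat) : (k < 33)%N -> (j < 75)%N -> tb Rtab k j = RI k j.
Proof.
move=> hk hj; rewrite /tb /Rtab (nth_map 0%N) ?size_iota // nth_iota //.
by rewrite (nth_map 0%N) ?size_iota // nth_iota.
Qed.

Section Final.
Variable F : fieldType.
Definition imx m n (f : nat -> nat -> int) : 'M[F]_(m, n) := \matrix_(i < m, j < n) (f i j)%:~R.

Lemma isumE n (h : nat -> int) : \sum_(k < n) ((h k)%:~R : F) = (isum n h)%:~R.
Proof.
rewrite -(big_mkord xpredT (fun k => ((h k)%:~R : F))) /index_iota subn0 /isum.
elim: (iota 0 n) => [|k s IH]; first by rewrite big_nil.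
by rewrite big_cons IH /= intrD.
Qed.

Lemma imx_mul m n p (f g : nat -> nat -> int) :
  (imx m n f) *m (imx n p g) = imx m p (fun i j => isum n (fun k => f i k * g k j)).
Proof.
apply/matrixP => i j; rewrite !mxE -isumE; apply: eq_bigr => k _.
by rewrite !mxE intrM.
Qed.
Lemma imx_add m n (f g : nat -> nat -> int) :
  imx m n f + imx m n g = imx m n (fun i j => f i j + g i j).
Proof. by apply/matrixP => i j; rewrite !mxE intrD. Qed.
Lemma imx_ext m n (f g : nat -> nat -> int) :
  (forall i j, (i < m)%N -> (j < n)%N -> f i j = g i j) -> imx m n f = imx m n g.
Proof. by move=> H; apply/matrixP => i j; rewrite !mxE H. Qed.
Lemma imx_delta n : imx n n deltaI = 1%:M.
Proof.
apply/matrixP => i j; rewrite !mxE /deltaI.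
have -> : ((i : nat) == j) = (i == j) by [].
by case: (i == j); rewrite ?mulr1z ?mulr0z.
Qed.

Lemma relmx_imx : relmx F = imx 33 75 (tb Rtab).
Proof. by apply/matrixP => i j; rewrite relmxE mxE RtabE. Qed.

Lemma dom_vec i a b c : dom (@prM F) (@suM F) i (@vec F a) (@vec F b) (@vec F c) = @vec F (domL i a b c).
Proof. by case: i => [|[|[|[|i]]]]; rewrite /= /prM /suM !mk_vec. Qed.

Lemma evalmon_vec (m : 'I_75) : let g := @vec F g0l in
  evalmon (@prM F) (@suM F) m g g g g g = @vec F (evL m).
Proof.
rewrite /evalmon /evL; case: (m %/ 25)%N => [|[|k]]; by rewrite !dom_vec.
Qed.

Lemma sum_E (c : 'rV[F]_75) :
  \sum_(m < 75) c 0 m *: @vec F (evL m) = c *m imx 75 64 (EI Etab).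
Proof.
apply/rowP => i; rewrite !mxE summxE; apply: eq_bigr => m _.
rewrite !mxE /EI /Etab (nth_map 0%N) ?size_iota // nth_iota // add0n.
Qed.
End Final.

Unset Implicit Arguments.

Theorem theorem5p1 (F : fieldType) (charF0 : [pchar F] =i pred0) :
  row_free (relmx F) /\ \rank (relmx F) = 33%N /\
  (forall c : 'rV[F]_75, in_ker_d c <-> (c <= relmx F)%MS).
Proof.
have RW : relmx F *m imx F 75 33 (tb Wtab) = 1%:M.
  rewrite relmx_imx imx_mul -imx_delta; apply: imx_ext => i j hi hj.
  have := W_ok; rewrite /W2 => /allP /(_ i); rewrite mem_iota hi => /(_ isT).
  by move=> /allP /(_ j); rewrite mem_iota hj => /(_ isT) /eqP.
have rk : \rank (relmx F) = 33%N.
  apply/eqP; rewrite eqn_leq rank_leq_row /=.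
  by rewrite -{1}(mxrank1 F 33) -RW mxrankM_maxl.
split; first by rewrite /row_free rk.
split; first by [].
have cert : imx F 75 33 (tb Ytab) *m relmx F + imx F 75 64 (EI Etab) *m imx F 64 75 (tb Ztab) = 1%:M.
  rewrite relmx_imx !imx_mul imx_add -imx_delta; apply: imx_ext => i j hi hj.
  have := cert_ok; rewrite /cert2 => /allP /(_ i); rewrite mem_iota hi => /(_ isT).
  by move=> /allP /(_ j); rewrite mem_iota hj => /(_ isT) /eqP.
move=> c; split.
- move=> H.
  have := H _ _ _ (@model_dend F) (@vec F g0l) (@vec F g0l) (@vec F g0l) (@vec F g0l) (@vec F g0l).
  under eq_bigr do rewrite evalmon_vec.
  rewrite sum_E => cE.
  apply/submxP; exists (c *m imx F 75 33 (tb Ytab)).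
  transitivity (c *m 1%:M); first by rewrite mulmx1.
  by rewrite -cert mulmxDr !mulmxA cE mul0mx addr0.
- move=> /submxP [u ->] A pr su HD v w x y z.
  under eq_bigr do rewrite mxE scaler_suml.
  rewrite exchange_big /= big1 // => r _.
  under eq_bigr do rewrite -scalerA.
  by rewrite -scaler_sumr rel_row_sound // scaler0.
Qed.
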